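(* Let $\mathcal L(k;s,t)=k+\sum_{n\ge0}u_{n+1}(s,t)k^{-n}$ and $\mathcal P(k;s,t)=p_0(s,t)k^N+\cdots+p_{N-1}(s,t)k+p_N(s,t)$ (a constant term $p_N$ allowed, $p_0\ne0$) satisfy the $N$-dcmKP equations. If $\varphi(s,t)$ satisfies $$\frac{\partial\varphi(s,t)}{\partial t_n}=-\mathcal B_n\Bigl(-\frac{\partial\varphi(s,t)}{\partial x};s,t\Bigr),\qquad n\ge1,$$ (where $\mathcal B_n(k;s,t)$ is evaluated at $k=-\partial\varphi/\partial x$), then $$\tilde{\mathcal L}(k;s,t):=\mathcal L\Bigl(k-\frac{\partial\varphi}{\partial x};s,t\Bigr)=e^{\mathrm{ad}\varphi}\mathcal L,\qquad \tilde{\mathcal P}(k;s,t):=e^{\partial\varphi/\partial s}\,\mathcal P\Bigl(k-\frac{\partial\varphi}{\partial x};s,t\Bigr)$$ also satisfy the $N$-dcmKP equations.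
   Context: Fix a positive integer $N$. Variables $s$ (continuous), $x$, $t=(t_1,t_2,\dots)$, where $x$ and $t_1$ appear only through $x+t_1$. Poisson bracket $\{f,g\}=\frac{\partial f}{\partial k}\frac{\partial g}{\partial x}-\frac{\partial f}{\partial x}\frac{\partial g}{\partial k}$; $(\mathrm{ad}f)g=\{f,g\}$. For a polynomial $\mathcal P=p_0k^N+\cdots+p_N$ with $p_0\ne0$, $\log\mathcal P:=\log p_0+N\log k+\log(1+\sum_{n=1}^N(p_n/p_0)k^{-n})$ expanded in $k^{-1}$. The $N$-dcmKP equations are, for $n\ge1$, $\partial_{t_n}\mathcal L=\{\mathcal B_n,\mathcal L\}$ with $\mathcal B_n:=(\mathcal L^n)_{>0}$ (projection onto positive powers of $k$), $\partial_s\mathcal L=\{\log\mathcal P,\mathcal L\}$, $\partial_{t_n}\log\mathcal P=\partial_s\mathcal B_n-\{\log\mathcal P,\mathcal B_n\}$. *)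

(* Defs.v *)
From Stdlib Require Import Reals ZArith List Bool.
From Coquelicot Require Import Coquelicot.
Import ListNotations.
Open Scope R_scope.

(** A coefficient is a real function of (s, tau) where tau : nat -> R and
    tau i is the coordinate t_(i+1); since x and t_1 only occur through
    x + t_1, the coordinate tau 0 stands for x + t_1. *)
Definition CF := R -> (nat -> R) -> R.

Definition fzero : CF := fun _ _ => 0.
Definition fone : CF := fun _ _ => 1.
Definition fconst (c : R) : CF := fun _ _ => c.
Definition fadd (f g : CF) : CF := fun s t => f s t + g s t.
Definition fmul (f g : CF) : CF := fun s t => f s t * g s t.
Definition fopp (f : CF) : CF := fun s t => - f s t.
Definition fscal (c : R) (f : CF) : CF := fun s t => c * f s t.
Definition fdiv (f g : CF) : CF := fun s t => f s t / g s t.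
Definition fpow (f : CF) (m : nat) : CF := fun s t => (f s t) ^ m.

Definition upd (t : nat -> R) (i : nat) (y : R) : nat -> R :=
  fun j => if Nat.eqb j i then y else t j.

Inductive dir := Ds | Dc (i : nat).

Definition apply_dir (d : dir) (y : R) (f : CF) (s : R) (t : nat -> R) : R :=
  match d with Ds => f y t | Dc i => f s (upd t i y) end.
Definition coord (d : dir) (s : R) (t : nat -> R) : R :=
  match d with Ds => s | Dc i => t i end.

Definition dderiv (d : dir) (f : CF) : CF :=
  fun s t => Derive (fun y => apply_dir d y f s t) (coord d s t).

Definition ds : CF -> CF := dderiv Ds.
Definition dt (n : nat) : CF -> CF := dderiv (Dc (Nat.pred n)).
Definition dx : CF -> CF := dt 1.

Definition iterd (l : list dir) (f : CF) : CF := fold_right dderiv f l.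

Definition slice2 (d1 d2 : dir) (g : CF) (s : R) (t : nat -> R) : R * R -> R :=
  fun p => apply_dir d2 (snd p) (fun s' t' => apply_dir d1 (fst p) g s' t') s t.

Definition smooth (f : CF) : Prop :=
  forall l : list dir,
    (forall d s t, ex_derive (fun y => apply_dir d y (iterd l f) s t) (coord d s t)) /\
    (forall d1 d2 s t,
        continuous (slice2 d1 d2 (iterd l f) s t) (coord d1 s t, coord d2 s t)).

(** * Formal Laurent series in k^{-1}:  sum_{j <= ldeg} lco j k^j. *)
Record LS := mkLS { ldeg : Z; lco : Z -> CF }.

Definition coef (f : LS) (j : Z) : CF :=
  if (j <=? ldeg f)%Z then lco f j else fzero.

Definition LSeq (f g : LS) : Prop :=
  forall j s t, coef f j s t = coef g j s t.

Definition sumZ (a b : Z) (F : Z -> CF) : CF :=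
  fun s t => fold_right Rplus 0
     (map (fun i : nat => F (a + Z.of_nat i)%Z s t) (seq 0 (Z.to_nat (b - a + 1)))).
Definition sumN (a b : nat) (F : nat -> CF) : CF :=
  fun s t => fold_right Rplus 0 (map (fun i : nat => F i s t) (seq a (S b - a))).

Definition lconst (c : CF) : LS := mkLS 0 (fun j => if (j =? 0)%Z then c else fzero).
Definition lmono (d : Z) (c : CF) : LS := mkLS d (fun j => if (j =? d)%Z then c else fzero).
Definition lone : LS := lconst fone.
Definition ladd (f g : LS) : LS :=
  mkLS (Z.max (ldeg f) (ldeg g)) (fun j => fadd (coef f j) (coef g j)).
Definition lopp (f : LS) : LS := mkLS (ldeg f) (fun j => fopp (coef f j)).
Definition lsub (f g : LS) : LS := ladd f (lopp g).
Definition lmul (f g : LS) : LS :=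
  mkLS (ldeg f + ldeg g)
    (fun j => sumZ (j - ldeg g) (ldeg f) (fun i => fmul (coef f i) (coef g (j - i)))).
Fixpoint lpow (f : LS) (n : nat) : LS :=
  match n with O => lone | S m => lmul (lpow f m) f end.
Definition lpos (f : LS) : LS :=
  mkLS (ldeg f) (fun j => if (0 <? j)%Z then coef f j else fzero).
Definition ldk (f : LS) : LS :=
  mkLS (ldeg f - 1) (fun j => fscal (IZR (j + 1)) (coef f (j + 1))).
Definition lmap (D : CF -> CF) (f : LS) : LS := mkLS (ldeg f) (fun j => D (coef f j)).

Definition bracket (f g : LS) : LS :=
  lsub (lmul (ldk f) (lmap dx g)) (lmul (lmap dx f) (ldk g)).

Definition gbinom (j : Z) (m : nat) : R :=
  fold_right Rmult 1 (map (fun l => IZR j - INR l) (seq 0 m)) / INR (fact m).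

(** substitution k |-> k - a, expanded in k^{-1}:
    (k - a)^j = sum_m C(j,m) (-a)^m k^{j-m} *)
Definition lsubst (f : LS) (a : CF) : LS :=
  mkLS (ldeg f) (fun i => sumZ i (ldeg f) (fun j =>
     fmul (fscal (gbinom j (Z.to_nat (j - i))) (fpow (fopp a) (Z.to_nat (j - i))))
          (coef f j))).

Definition peval (f : LS) (a : CF) : CF :=
  sumZ 0 (ldeg f) (fun j => fmul (coef f j) (fpow a (Z.to_nat j))).

Definition Lax (u : nat -> CF) : LS :=
  mkLS 1 (fun j => if (j =? 1)%Z then fone else u (Z.to_nat (1 - j))).

Definition polyLS (N : nat) (p : nat -> CF) : LS :=
  mkLS (Z.of_nat N) (fun j => if (0 <=? j)%Z then p (Z.to_nat (Z.of_nat N - j)) else fzero).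

Definition Bn (L : LS) (n : nat) : LS := lpos (lpow L n).

(** * log P = log p_0 + N log k + log(1 + q),  q = sum_{n=1}^N (p_n/p_0) k^{-n},
    log(1+q) = sum_{m>=1} (-1)^(m+1) q^m / m  (q^m has degree <= -m, so the
    coefficient of k^j only involves m <= -j). *)
Definition qser (N : nat) (p : nat -> CF) : LS :=
  mkLS (-1) (fun j => if andb (j <? 0)%Z (- j <=? Z.of_nat N)%Z
                      then fdiv (p (Z.to_nat (- j))) (p 0%nat) else fzero).
Definition log1q (N : nat) (p : nat -> CF) : LS :=
  mkLS (-1) (fun j => sumN 1 (Z.to_nat (- j)) (fun m =>
     fscal ((-1) ^ (S m) / INR m) (coef (lpow (qser N p) m) j))).
(** the scalar part log p_0 (taken as ln|p_0|; it only enters through its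
    derivatives, which agree with those of any branch of log p_0) *)
Definition logp0 (p : nat -> CF) : CF := fun s t => ln (Rabs (p 0%nat s t)).

Definition logD (N : nat) (p : nat -> CF) (D : CF -> CF) : LS :=
  ladd (lconst (D (logp0 p))) (lmap D (log1q N p)).
Definition logDk (N : nat) (p : nat -> CF) : LS :=
  ladd (lmono (-1) (fconst (INR N))) (ldk (log1q N p)).
Definition bracket_log (N : nat) (p : nat -> CF) (g : LS) : LS :=
  lsub (lmul (logDk N p) (lmap dx g)) (lmul (logD N p dx) (ldk g)).

Definition dcmKP (N : nat) (L : LS) (p : nat -> CF) : Prop :=
  (forall s t, p 0%nat s t <> 0) /\
  (forall n, (1 <= n)%nat ->
      LSeq (lmap (dt n) L) (bracket (Bn L n) L) /\
      LSeq (logD N p (dt n)) (lsub (lmap ds (Bn L n)) (bracket_log N p (Bn L n)))) /\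
  LSeq (lmap ds L) (bracket_log N p L).

Definition adphi (phi : CF) (f : LS) : LS := bracket (lconst phi) f.
Fixpoint adpow (phi : CF) (m : nat) (f : LS) : LS :=
  match m with O => f | S m' => adphi phi (adpow phi m' f) end.
Definition is_expad (phi : CF) (f g : LS) : Prop :=
  forall j s t, exists M : nat, forall M', (M <= M')%nat ->
    fold_right Rplus 0 (map (fun m => coef (adpow phi m f) j s t / INR (fact m)) (seq 0 M'))
    = coef g j s t.

(** P~ = e^{phi_s} P(k - phi_x), its coefficients p~_i (coefficient of k^{N-i}) *)
Definition ptilde (N : nat) (p : nat -> CF) (phi : CF) : nat -> CF :=
  fun i => fmul (fun s t => exp (ds phi s t))
                (coef (lsubst (polyLS N p) (dx phi)) (Z.of_nat N - Z.of_nat i)).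

(* Main.v *)
Require Import Defs.
From Stdlib Require Import Reals ZArith List Lia Lra FunctionalExtensionality Setoid Morphisms Ring.
From Coquelicot Require Import Coquelicot.
Import ListNotations.
Open Scope R_scope.

Definition zsum (a b : Z) (F : Z -> R) : R :=
  fold_right Rplus 0 (map (fun i : nat => F (a + Z.of_nat i)%Z) (seq 0 (Z.to_nat (b - a + 1)))).

Lemma sumZ_zsum a b F s t : sumZ a b F s t = zsum a b (fun i => F i s t).
Proof. reflexivity. Qed.

Lemma fold_Rplus_app l1 l2 :
  fold_right Rplus 0 (l1 ++ l2) = fold_right Rplus 0 l1 + fold_right Rplus 0 l2.
Proof. induction l1; simpl; [lra|rewrite IHl1; lra]. Qed.

Lemma zsum_nil a b F : (b < a)%Z -> zsum a b F = 0.
Proof. intros H. unfold zsum. replace (Z.to_nat (b - a + 1)) with 0%nat by lia. reflexivity. Qed.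

Lemma zsum_first a b F : (a <= b)%Z -> zsum a b F = F a + zsum (a+1) b F.
Proof.
  intros H. unfold zsum.
  replace (Z.to_nat (b - a + 1)) with (S (Z.to_nat (b - (a+1) + 1))) by lia.
  simpl. rewrite Z.add_0_r. f_equal.
  rewrite <- seq_shift, map_map. f_equal. apply map_ext. intros i. f_equal. lia.
Qed.

Lemma zsum_last a b F : (a <= b)%Z -> zsum a b F = zsum a (b-1) F + F b.
Proof.
  intros H. unfold zsum.
  replace (Z.to_nat (b - a + 1)) with (S (Z.to_nat (b - 1 - a + 1))) by lia.
  rewrite seq_S, map_app, fold_Rplus_app. simpl. rewrite Rplus_0_r. f_equal. f_equal. lia.
Qed.

Lemma zsum_single a F : zsum a a F = F a.
Proof. rewrite zsum_first by lia. rewrite zsum_nil by lia. lra. Qed.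

Lemma zsum_ind (P : Z -> Z -> Prop) :
  (forall a b, (b < a)%Z -> P a b) ->
  (forall a b, (a <= b)%Z -> P (a+1)%Z b -> P a b) ->
  forall a b, P a b.
Proof.
  intros H0 HS.
  assert (forall n a b, Z.to_nat (b - a + 1) = n -> P a b).
  { induction n; intros a b Hn.
    - apply H0. lia.
    - apply HS. lia. apply IHn. lia. }
  intros a b. eapply H; reflexivity.
Qed.

Lemma zsum_ext a b F G : (forall i, (a <= i <= b)%Z -> F i = G i) -> zsum a b F = zsum a b G.
Proof.
  revert a b. apply (zsum_ind (fun a b => (forall i, (a <= i <= b)%Z -> F i = G i) -> zsum a b F = zsum a b G)).
  - intros a b H _. rewrite !zsum_nil by lia. reflexivity.
  - intros a b Hab IH H. rewrite !(zsum_first a b) by lia. rewrite H by lia. rewrite IH. reflexivity.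
    intros; apply H; lia.
Qed.

Lemma zsum_plus a b F G : zsum a b (fun i => F i + G i) = zsum a b F + zsum a b G.
Proof.
  revert a b. apply zsum_ind.
  - intros a b H. rewrite !zsum_nil by lia. lra.
  - intros a b Hab IH. rewrite !(zsum_first a b) by lia. rewrite IH. lra.
Qed.

Lemma zsum_scal a b c F : zsum a b (fun i => c * F i) = c * zsum a b F.
Proof.
  revert a b. apply zsum_ind.
  - intros a b H. rewrite !zsum_nil by lia. lra.
  - intros a b Hab IH. rewrite !(zsum_first a b) by lia. rewrite IH. lra.
Qed.

Lemma zsum_scal_r a b c F : zsum a b (fun i => F i * c) = zsum a b F * c.
Proof. rewrite Rmult_comm, <- zsum_scal. apply zsum_ext. intros; lra. Qed.

Lemma zsum_opp a b F : zsum a b (fun i => - F i) = - zsum a b F.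
Proof. replace (- zsum a b F) with ((-1) * zsum a b F) by lra. rewrite <- zsum_scal. apply zsum_ext; intros; lra. Qed.

Lemma zsum_zero a b F : (forall i, (a <= i <= b)%Z -> F i = 0) -> zsum a b F = 0.
Proof.
  revert a b. apply (zsum_ind (fun a b => (forall i, (a <= i <= b)%Z -> F i = 0) -> zsum a b F = 0)).
  - intros a b H _. apply zsum_nil; lia.
  - intros a b Hab IH H. rewrite zsum_first by lia. rewrite H, IH by (try intros; try apply H; lia). lra.
Qed.

Lemma zsum_split a m b F : (a <= m <= b + 1)%Z -> zsum a b F = zsum a (m-1) F + zsum m b F.
Proof.
  intros H. remember (Z.to_nat (m - a)) as n. revert a H Heqn.
  induction n; intros a H Hn.
  - replace m with a by lia. rewrite (zsum_nil a (a-1)) by lia. lra.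
  - rewrite (zsum_first a b) by lia. rewrite (zsum_first a (m-1)) by lia.
    rewrite (IHn (a+1)%Z) by lia. lra.
Qed.

Lemma zsum_win a b lo hi F :
  (forall i, (i < lo \/ hi < i)%Z -> F i = 0) -> (a <= lo)%Z -> (hi <= b)%Z -> (lo <= hi + 1)%Z ->
  zsum a b F = zsum lo hi F.
Proof.
  intros H H1 H2 H3.
  rewrite (zsum_split a lo b) by lia.
  rewrite (zsum_split lo (hi+1) b) by lia.
  rewrite (zsum_zero a (lo-1)) by (intros; apply H; lia).
  rewrite (zsum_zero (hi+1) b) by (intros; apply H; lia).
  replace (hi + 1 - 1)%Z with hi by lia. lra.
Qed.

Lemma zsum_win2 a1 b1 a2 b2 lo hi F :
  (forall i, (i < lo \/ hi < i)%Z -> F i = 0) ->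
  (a1 <= lo)%Z -> (hi <= b1)%Z -> (a2 <= lo)%Z -> (hi <= b2)%Z ->
  zsum a1 b1 F = zsum a2 b2 F.
Proof.
  intros H H1 H2 H3 H4.
  destruct (Z_le_gt_dec lo (hi+1)).
  - rewrite (zsum_win a1 b1 lo hi), (zsum_win a2 b2 lo hi); auto.
  - rewrite !zsum_zero; auto; intros i Hi; apply H; lia.
Qed.

Lemma zsum_shift a b c F : zsum a b (fun i => F (i + c)%Z) = zsum (a + c) (b + c) F.
Proof.
  unfold zsum. replace (b + c - (a + c) + 1)%Z with (b - a + 1)%Z by lia.
  apply f_equal, map_ext. intros i. f_equal. lia.
Qed.

Lemma zsum_rev a b F : zsum a b (fun i => F (- i)%Z) = zsum (-b) (-a) F.
Proof.
  revert a b. apply zsum_ind.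
  - intros a b H. rewrite !zsum_nil by lia. reflexivity.
  - intros a b Hab IH. rewrite (zsum_first a b) by lia. rewrite IH.
    rewrite (zsum_last (-b) (-a)) by lia. replace (- (a+1))%Z with (-a - 1)%Z by lia. lra.
Qed.

Lemma zsum_swap a b c d G :
  zsum a b (fun i => zsum c d (fun l => G i l)) = zsum c d (fun l => zsum a b (fun i => G i l)).
Proof.
  revert a b. apply zsum_ind.
  - intros a b H. rewrite zsum_nil by lia. symmetry. apply zsum_zero. intros. apply zsum_nil. lia.
  - intros a b Hab IH. rewrite (zsum_first a b) by lia. rewrite IH.
    rewrite <- zsum_plus. apply zsum_ext. intros. rewrite (zsum_first a b) by lia. reflexivity.
Qed.

Lemma zsum_refl a b j F : zsum a b (fun i => F (j - i)%Z) = zsum (j - b) (j - a) F.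
Proof.
  transitivity (zsum a b (fun i => (fun x => F (x + j)%Z) (- i)%Z)).
  apply zsum_ext; intros; f_equal; lia.
  rewrite (zsum_rev a b (fun x => F (x + j)%Z)), zsum_shift. f_equal; lia.
Qed.

Lemma zsum_ext_hi a b b' F : (b <= b')%Z -> (forall i, (b < i <= b')%Z -> F i = 0) -> zsum a b' F = zsum a b F.
Proof.
  intros H1 H2. destruct (Z_le_gt_dec a (b+1)).
  - rewrite (zsum_split a (b+1) b') by lia. rewrite (zsum_zero (b+1) b') by (intros; apply H2; lia).
    replace (b + 1 - 1)%Z with b by lia. lra.
  - rewrite (zsum_nil a b) by lia. apply zsum_zero. intros; apply H2; lia.
Qed.

Lemma zsum_delta a b k F : (a <= k <= b)%Z -> (forall i, i <> k -> F i = 0) -> zsum a b F = F k.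
Proof.
  intros H1 H2. rewrite (zsum_win a b k k); try lia. apply zsum_single.
  intros i Hi; apply H2; lia.
Qed.

Lemma coef_above f j s t : (ldeg f < j)%Z -> coef f j s t = 0.
Proof. intros H. unfold coef. replace (j <=? ldeg f)%Z with false by (symmetry; apply Z.leb_gt; lia). reflexivity. Qed.

Lemma coef_below f j : (j <= ldeg f)%Z -> coef f j = lco f j.
Proof. intros H. unfold coef. replace (j <=? ldeg f)%Z with true by (symmetry; apply Z.leb_le; lia). reflexivity. Qed.

Ltac coef_cases f j := destruct (Z_le_gt_dec j (ldeg f)).

Lemma coef_ladd f g j s t : coef (ladd f g) j s t = coef f j s t + coef g j s t.
Proof.
  destruct (Z_le_gt_dec j (Z.max (ldeg f) (ldeg g))).
  - rewrite coef_below by (simpl; lia). reflexivity.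
  - rewrite !coef_above by (simpl; lia). lra.
Qed.

Lemma coef_lopp f j s t : coef (lopp f) j s t = - coef f j s t.
Proof.
  destruct (Z_le_gt_dec j (ldeg f)).
  - rewrite coef_below by (simpl; lia). reflexivity.
  - rewrite !coef_above by (simpl; lia). lra.
Qed.

Lemma coef_lsub f g j s t : coef (lsub f g) j s t = coef f j s t - coef g j s t.
Proof. unfold lsub. rewrite coef_ladd, coef_lopp. lra. Qed.

Lemma coef_lmul f g j s t lo hi : (lo <= j - ldeg g)%Z -> (ldeg f <= hi)%Z ->
  coef (lmul f g) j s t = zsum lo hi (fun i => coef f i s t * coef g (j - i) s t).
Proof.
  intros H1 H2.
  destruct (Z_le_gt_dec j (ldeg f + ldeg g)).
  - rewrite coef_below by (simpl; lia). simpl. rewrite sumZ_zsum.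
    apply (zsum_win2 _ _ _ _ (j - ldeg g) (ldeg f)); try lia.
    intros i [Hi|Hi]; unfold fmul.
    + rewrite (coef_above g) by lia. lra.
    + rewrite (coef_above f) by lia. lra.
  - rewrite coef_above by (simpl; lia). symmetry. apply zsum_zero. intros i Hi.
    destruct (Z_le_gt_dec i (ldeg f)).
    + rewrite (coef_above g) by lia. lra.
    + rewrite (coef_above f) by lia. lra.
Qed.

Lemma coef_lconst c j s t : coef (lconst c) j s t = if (j =? 0)%Z then c s t else 0.
Proof.
  destruct (Z_le_gt_dec j 0).
  - rewrite coef_below by (simpl; lia). simpl. destruct (j =? 0)%Z; reflexivity.
  - rewrite coef_above by (simpl; lia). replace (j =? 0)%Z with false by (symmetry; apply Z.eqb_neq; lia). reflexivity.
Qed.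

Lemma coef_lmono d c j s t : coef (lmono d c) j s t = if (j =? d)%Z then c s t else 0.
Proof.
  destruct (Z_le_gt_dec j d).
  - rewrite coef_below by (simpl; lia). simpl. destruct (j =? d)%Z; reflexivity.
  - rewrite coef_above by (simpl; lia). replace (j =? d)%Z with false by (symmetry; apply Z.eqb_neq; lia). reflexivity.
Qed.

Lemma coef_ldk f j s t : coef (ldk f) j s t = IZR (j + 1) * coef f (j+1) s t.
Proof.
  destruct (Z_le_gt_dec j (ldeg f - 1)).
  - rewrite coef_below by (simpl; lia). reflexivity.
  - rewrite !coef_above by (simpl; lia). lra.
Qed.

Lemma coef_lpos f j s t : coef (lpos f) j s t = if (0 <? j)%Z then coef f j s t else 0.
Proof.
  destruct (Z_le_gt_dec j (ldeg f)).
  - rewrite coef_below by (simpl; lia). simpl. destruct (0 <? j)%Z; reflexivity.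
  - rewrite !coef_above by (simpl; lia). destruct (0 <? j)%Z; reflexivity.
Qed.

Lemma coef_lmap D f j s t : D fzero s t = 0 -> coef (lmap D f) j s t = D (coef f j) s t.
Proof.
  intros HD. destruct (Z_le_gt_dec j (ldeg f)).
  - rewrite coef_below by (simpl; lia). simpl. rewrite coef_below by lia. reflexivity.
  - rewrite coef_above by (simpl; lia). unfold coef. replace (j <=? ldeg f)%Z with false by (symmetry; apply Z.leb_gt; lia). auto.
Qed.

Lemma dderiv_zero d s t : dderiv d fzero s t = 0.
Proof. unfold dderiv, fzero. destruct d; simpl; apply Derive_const. Qed.

Lemma coef_lmapd d f j s t : coef (lmap (dderiv d) f) j s t = dderiv d (coef f j) s t.
Proof. apply coef_lmap, dderiv_zero. Qed.

Lemma coef_lsubst f a i s t hi : (ldeg f <= hi)%Z ->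
  coef (lsubst f a) i s t =
  zsum i hi (fun j => gbinom j (Z.to_nat (j - i)) * (- a s t) ^ (Z.to_nat (j - i)) * coef f j s t).
Proof.
  intros H. destruct (Z_le_gt_dec i (ldeg f)).
  - rewrite coef_below by (simpl; lia). simpl. rewrite sumZ_zsum.
    symmetry. apply zsum_ext_hi; auto. intros j Hj. cbv beta. unfold fmul. rewrite coef_above by lia. lra.
  - rewrite coef_above by (simpl; lia). symmetry. apply zsum_zero. intros j Hj.
    rewrite coef_above by lia. lra.
Qed.

Lemma ldeg_lpow f n : ldeg (lpow f n) = (Z.of_nat n * ldeg f)%Z.
Proof. induction n; simpl lpow; [reflexivity|]. simpl ldeg. rewrite IHn. lia. Qed.

Lemma LSeq_refl f : LSeq f f. Proof. intros j s t; reflexivity. Qed.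
Lemma LSeq_sym f g : LSeq f g -> LSeq g f. Proof. intros H j s t; auto. Qed.
Lemma LSeq_trans f g h : LSeq f g -> LSeq g h -> LSeq f h. Proof. intros H1 H2 j s t; rewrite H1; auto. Qed.

Add Parametric Relation : LS LSeq
  reflexivity proved by LSeq_refl symmetry proved by LSeq_sym transitivity proved by LSeq_trans as LSeq_rel.

Add Parametric Morphism : coef with signature LSeq ==> eq ==> eq ==> eq ==> eq as coef_mor.
Proof. intros f g H j s t. apply H. Qed.

Add Parametric Morphism : ladd with signature LSeq ==> LSeq ==> LSeq as ladd_mor.
Proof. intros f f' Hf g g' Hg j s t. rewrite !coef_ladd, Hf, Hg. reflexivity. Qed.

Add Parametric Morphism : lopp with signature LSeq ==> LSeq as lopp_mor.
Proof. intros f f' Hf j s t. rewrite !coef_lopp, Hf. reflexivity. Qed.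

Add Parametric Morphism : lsub with signature LSeq ==> LSeq ==> LSeq as lsub_mor.
Proof. intros f f' Hf g g' Hg j s t. rewrite !coef_lsub, Hf, Hg. reflexivity. Qed.

Add Parametric Morphism : lmul with signature LSeq ==> LSeq ==> LSeq as lmul_mor.
Proof.
  intros f f' Hf g g' Hg j s t.
  rewrite (coef_lmul f g j s t (Z.min (j - ldeg g) (j - ldeg g')) (Z.max (ldeg f) (ldeg f'))) by lia.
  rewrite (coef_lmul f' g' j s t (Z.min (j - ldeg g) (j - ldeg g')) (Z.max (ldeg f) (ldeg f'))) by lia.
  apply zsum_ext. intros. rewrite Hf, Hg. reflexivity.
Qed.

Add Parametric Morphism : ldk with signature LSeq ==> LSeq as ldk_mor.
Proof. intros f f' Hf j s t. rewrite !coef_ldk, Hf. reflexivity. Qed.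

Add Parametric Morphism : lpos with signature LSeq ==> LSeq as lpos_mor.
Proof. intros f f' Hf j s t. rewrite !coef_lpos, Hf. reflexivity. Qed.

Lemma LSeq_coef_fun f g j : LSeq f g -> coef f j = coef g j.
Proof. intros H. extensionality s. extensionality t. apply H. Qed.

Add Parametric Morphism d : (lmap (dderiv d)) with signature LSeq ==> LSeq as lmap_mor.
Proof. intros f f' Hf j s t. rewrite !coef_lmapd, (LSeq_coef_fun f f' j Hf). reflexivity. Qed.

Add Parametric Morphism : lsubst with signature LSeq ==> eq ==> LSeq as lsubst_mor.
Proof.
  intros f f' Hf a j s t.
  rewrite (coef_lsubst f a j s t (Z.max (ldeg f) (ldeg f'))) by lia.
  rewrite (coef_lsubst f' a j s t (Z.max (ldeg f) (ldeg f'))) by lia.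
  apply zsum_ext. intros. rewrite Hf. reflexivity.
Qed.

Add Parametric Morphism : lpow with signature LSeq ==> eq ==> LSeq as lpow_mor.
Proof. intros f f' Hf n. induction n; simpl. reflexivity. rewrite IHn, Hf. reflexivity. Qed.

Add Parametric Morphism : bracket with signature LSeq ==> LSeq ==> LSeq as bracket_mor.
Proof. intros f f' Hf g g' Hg. unfold bracket. rewrite Hf, Hg. reflexivity. Qed.

Add Parametric Morphism : Bn with signature LSeq ==> eq ==> LSeq as Bn_mor.
Proof. intros f f' Hf n. unfold Bn. rewrite Hf. reflexivity. Qed.

Lemma lpow_mor' f f' n : LSeq f f' -> LSeq (lpow f n) (lpow f' n).
Proof. intros H. induction n; simpl. reflexivity. rewrite IHn, H. reflexivity. Qed.
Lemma Bn_mor' f f' n : LSeq f f' -> LSeq (Bn f n) (Bn f' n).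
Proof. intros H. unfold Bn. rewrite (lpow_mor' f f' n H). reflexivity. Qed.

(** * ring structure *)
Definition lzero : LS := lconst fzero.

Lemma coef_lzero j s t : coef lzero j s t = 0.
Proof. unfold lzero. rewrite coef_lconst. destruct (j =? 0)%Z; reflexivity. Qed.

Lemma coef_lone j s t : coef lone j s t = if (j =? 0)%Z then 1 else 0.
Proof. unfold lone. rewrite coef_lconst. reflexivity. Qed.

Lemma lmul_const_l c g j s t : coef (lmul (lconst c) g) j s t = c s t * coef g j s t.
Proof.
  rewrite (coef_lmul _ _ j s t (Z.min 0 (j - ldeg g)) (Z.max 0 (ldeg (lconst c)))) by lia.
  rewrite (zsum_delta _ _ 0); try lia.
  - rewrite coef_lconst. simpl. f_equal. f_equal. lia.
  - intros i Hi. rewrite coef_lconst. replace (i =? 0)%Z with false by (symmetry; apply Z.eqb_neq; lia). lra.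
Qed.

Lemma lmul_comm f g : LSeq (lmul f g) (lmul g f).
Proof.
  intros j s t.
  rewrite (coef_lmul f g j s t (j - ldeg g) (ldeg f)) by lia.
  rewrite (coef_lmul g f j s t (j - ldeg f) (ldeg g)) by lia.
  transitivity (zsum (j - ldeg g) (ldeg f) (fun i => (fun x => coef g x s t * coef f (j - x) s t) (j - i)%Z)).
  - apply zsum_ext; intros i Hi; cbv beta. replace (j - (j - i))%Z with i by lia. lra.
  - etransitivity; [apply (zsum_refl (j - ldeg g) (ldeg f) j (fun x => coef g x s t * coef f (j - x) s t))|].
    f_equal; lia.
Qed.

Lemma zsum_shift' a b c F : zsum a b F = zsum (a + c) (b + c) (fun i => F (i - c)%Z).
Proof. rewrite <- zsum_shift. apply zsum_ext. intros; f_equal; lia. Qed.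

Lemma lmul_assoc f g h : LSeq (lmul f (lmul g h)) (lmul (lmul f g) h).
Proof.
  intros j s t.
  set (df := ldeg f). set (dg := ldeg g). set (dh := ldeg h).
  rewrite (coef_lmul (lmul f g) h j s t (j - dh) (df + dg)) by (simpl; lia).
  rewrite (coef_lmul f (lmul g h) j s t (j - dg - dh) df) by (simpl; lia).
  transitivity (zsum (j - dg - dh) df (fun l => zsum (j - dh) (df + dg) (fun i =>
       coef f l s t * coef g (i - l) s t * coef h (j - i) s t))).
  - apply zsum_ext. intros l Hl.
    rewrite (coef_lmul g h (j - l) s t (j - l - dh) dg) by lia.
    rewrite <- zsum_scal.
    rewrite (zsum_shift' _ _ l).
    transitivity (zsum (j - l - dh + l) (dg + l) (fun i => coef f l s t * coef g (i - l) s t * coef h (j - i) s t)).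
    { apply zsum_ext. intros i Hi. replace (j - l - (i - l))%Z with (j - i)%Z by lia. lra. }
    replace (j - l - dh + l)%Z with (j - dh)%Z by lia.
    symmetry. apply zsum_ext_hi. lia. intros i Hi. rewrite (coef_above g) by lia. lra.
  - rewrite zsum_swap. apply zsum_ext. intros i Hi.
    rewrite (coef_lmul f g i s t (j - dg - dh) df) by lia.
    rewrite <- zsum_scal_r. reflexivity.
Qed.

Lemma lmul_distr f g h : LSeq (lmul (ladd f g) h) (ladd (lmul f h) (lmul g h)).
Proof.
  intros j s t. rewrite coef_ladd.
  rewrite (coef_lmul _ _ j s t (j - ldeg h) (Z.max (ldeg f) (ldeg g))) by (simpl; lia).
  rewrite (coef_lmul f _ j s t (j - ldeg h) (Z.max (ldeg f) (ldeg g))) by (simpl; lia).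
  rewrite (coef_lmul g _ j s t (j - ldeg h) (Z.max (ldeg f) (ldeg g))) by (simpl; lia).
  rewrite <- zsum_plus. apply zsum_ext. intros. rewrite coef_ladd. lra.
Qed.

Lemma LS_ring : ring_theory lzero lone ladd lmul lsub lopp LSeq.
Proof.
  constructor; intros.
  - intros j s t. rewrite coef_ladd, coef_lzero. lra.
  - intros j s t. rewrite !coef_ladd. lra.
  - intros j s t. rewrite !coef_ladd. lra.
  - intros j s t. unfold lone. rewrite lmul_const_l. unfold fone. lra.
  - apply lmul_comm.
  - apply lmul_assoc.
  - apply lmul_distr.
  - reflexivity.
  - intros j s t. rewrite coef_ladd, coef_lopp, coef_lzero. lra.
Qed.

Lemma LS_ring_ext : ring_eq_ext ladd lmul lopp LSeq.
Proof. constructor; [exact ladd_mor_Proper | exact lmul_mor_Proper | exact lopp_mor_Proper]. Qed.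

Add Ring LSring : LS_ring (setoid LSeq_rel LS_ring_ext).


Definition ff (x : R) (m : nat) : R := fold_right Rmult 1 (map (fun l => x - INR l) (seq 0 m)).
Definition bin (x : R) (m : nat) : R := ff x m / INR (fact m).

Lemma gbinom_bin j m : gbinom j m = bin (IZR j) m.
Proof. reflexivity. Qed.

Lemma fold_Rmult_app l1 l2 :
  fold_right Rmult 1 (l1 ++ l2) = fold_right Rmult 1 l1 * fold_right Rmult 1 l2.
Proof. induction l1; simpl; [lra|rewrite IHl1; lra]. Qed.

Lemma ff_0 x : ff x 0 = 1. Proof. reflexivity. Qed.

Lemma ff_S_r x m : ff x (S m) = ff x m * (x - INR m).
Proof. unfold ff. rewrite seq_S, map_app, fold_Rmult_app. simpl. lra. Qed.

Lemma ff_S_l x m : ff x (S m) = x * ff (x - 1) m.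
Proof.
  unfold ff. simpl. rewrite <- seq_shift, map_map. f_equal. lra.
  f_equal. apply map_ext. intros l. rewrite S_INR. lra.
Qed.

Lemma ff_zero j m : (0 <= j)%Z -> (j < Z.of_nat m)%Z -> ff (IZR j) m = 0.
Proof.
  induction m; intros H1 H2; [lia|].
  rewrite ff_S_r. destruct (Z.eq_dec j (Z.of_nat m)).
  - subst. rewrite <- INR_IZR_INZ. lra.
  - rewrite IHm by lia. lra.
Qed.

Lemma ff_fact m : ff (INR m) m = INR (fact m).
Proof.
  induction m. reflexivity.
  rewrite ff_S_l. replace (INR (S m) - 1) with (INR m) by (rewrite S_INR; lra).
  rewrite IHm. rewrite fact_simpl, mult_INR. reflexivity.
Qed.

Lemma fact_pos m : INR (fact m) <> 0.
Proof. apply not_0_INR, fact_neq_0. Qed.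

Lemma bin_0 x : bin x 0 = 1. Proof. unfold bin. rewrite ff_0. simpl. field. Qed.

Lemma bin_diag m : bin (INR m) m = 1.
Proof. unfold bin. rewrite ff_fact. field. apply fact_pos. Qed.

Lemma bin_b1 x m : bin x (S m) * INR (S m) = bin x m * (x - INR m).
Proof.
  unfold bin. rewrite ff_S_r. rewrite fact_simpl, mult_INR.
  field. split; [apply fact_pos|]. apply not_0_INR. lia.
Qed.

Lemma bin_b2 x m : bin x (S m) * INR (S m) = x * bin (x - 1) m.
Proof.
  unfold bin. rewrite ff_S_l. rewrite fact_simpl, mult_INR.
  field. split; [apply fact_pos|]. apply not_0_INR. lia.
Qed.

Lemma bin_b3 x m : bin x m * (x - INR m) = x * bin (x - 1) m.
Proof. rewrite <- bin_b1, bin_b2. reflexivity. Qed.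

Lemma bin_zero j m : (0 <= j)%Z -> (j < Z.of_nat m)%Z -> bin (IZR j) m = 0.
Proof. intros. unfold bin. rewrite ff_zero by auto. lra. Qed.

Definition nsum (n : nat) (F : nat -> R) : R := fold_right Rplus 0 (map F (seq 0 n)).

Lemma nsum_S_r n F : nsum (S n) F = nsum n F + F n.
Proof. unfold nsum. rewrite seq_S, map_app, fold_Rplus_app. simpl. lra. Qed.

Lemma nsum_S_l n F : nsum (S n) F = F 0%nat + nsum n (fun i => F (S i)).
Proof. unfold nsum. simpl. rewrite <- seq_shift, map_map. reflexivity. Qed.

Lemma nsum_ext n F G : (forall i, (i < n)%nat -> F i = G i) -> nsum n F = nsum n G.
Proof.
  induction n; intros H. reflexivity.
  rewrite !nsum_S_r, IHn, (H n) by (try intros; try apply H; lia). reflexivity.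
Qed.

Lemma nsum_plus n F G : nsum n (fun i => F i + G i) = nsum n F + nsum n G.
Proof. induction n. unfold nsum; simpl; lra. rewrite !nsum_S_r, IHn. lra. Qed.

Lemma nsum_scal n c F : nsum n (fun i => c * F i) = c * nsum n F.
Proof. induction n. unfold nsum; simpl; lra. rewrite !nsum_S_r, IHn. lra. Qed.

Lemma vandermonde m : forall x y,
  nsum (S m) (fun r => bin x r * bin y (m - r)) = bin (x + y) m.
Proof.
  induction m; intros x y.
  - unfold nsum. simpl. rewrite !bin_0. lra.
  - apply (Rmult_eq_reg_r (INR (S m))); [|apply not_0_INR; lia].
    rewrite bin_b1, <- IHm.
    transitivity (nsum (S (S m)) (fun r => INR r * (bin x r * bin y (S m - r)))
                + nsum (S (S m)) (fun r => INR (S m - r) * (bin x r * bin y (S m - r)))).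
    { rewrite <- nsum_plus. rewrite Rmult_comm, <- nsum_scal. apply nsum_ext.
      intros i Hi. rewrite minus_INR by lia. lra. }
    rewrite (nsum_S_l (S m) (fun r => INR r * _)).
    rewrite (nsum_S_r (S m) (fun r => INR (S m - r) * _)).
    replace (S m - S m)%nat with 0%nat by lia.
    simpl (INR 0).
    rewrite !Rmult_0_l, Rplus_0_l, Rplus_0_r, <- nsum_plus, Rmult_comm, <- nsum_scal.
    apply nsum_ext. intros r Hr.
    replace (S m - S r)%nat with (m - r)%nat by lia.
    replace (S m - r)%nat with (S (m - r))%nat by lia.
    replace (INR (S r) * (bin x (S r) * bin y (m - r))) with ((bin x (S r) * INR (S r)) * bin y (m - r)) by ring.
    replace (INR (S (m - r)) * (bin x r * bin y (S (m - r)))) with (bin x r * (bin y (S (m - r)) * INR (S (m - r)))) by ring.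
    rewrite !bin_b1. rewrite minus_INR by lia. ring.
Qed.

Lemma coefT f a i s t hi : (ldeg f <= hi)%Z ->
  coef (lsubst f a) i s t =
  zsum i hi (fun j => bin (IZR j) (Z.to_nat (j - i)) * (- a s t) ^ (Z.to_nat (j - i)) * coef f j s t).
Proof. apply coef_lsubst. Qed.

Lemma T_ladd f g a : LSeq (lsubst (ladd f g) a) (ladd (lsubst f a) (lsubst g a)).
Proof.
  intros i s t. rewrite coef_ladd.
  rewrite !(coefT _ a i s t (Z.max (ldeg f) (ldeg g))) by (simpl; lia).
  rewrite <- zsum_plus. apply zsum_ext. intros. rewrite coef_ladd. ring.
Qed.

Lemma T_lopp f a : LSeq (lsubst (lopp f) a) (lopp (lsubst f a)).
Proof.
  intros i s t. rewrite coef_lopp.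
  rewrite !(coefT _ a i s t (ldeg f)) by (simpl; lia).
  rewrite <- zsum_opp. apply zsum_ext. intros. rewrite coef_lopp. ring.
Qed.

Lemma T_lsub f g a : LSeq (lsubst (lsub f g) a) (lsub (lsubst f a) (lsubst g a)).
Proof. unfold lsub. rewrite T_ladd, T_lopp. reflexivity. Qed.

Lemma T_lconst c a : LSeq (lsubst (lconst c) a) (lconst c).
Proof.
  intros i s t. rewrite coef_lconst.
  rewrite (coefT _ a i s t 0) by (simpl; lia).
  destruct (Z_le_gt_dec i 0).
  - rewrite (zsum_delta _ _ 0) by (try lia; intros j Hj; rewrite coef_lconst;
        replace (j =? 0)%Z with false by (symmetry; apply Z.eqb_neq; lia); ring).
    rewrite coef_lconst. simpl (0 =? 0)%Z.
    destruct (Z.eq_dec i 0).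
    + subst. simpl. rewrite bin_0. ring.
    + replace (i =? 0)%Z with false by (symmetry; apply Z.eqb_neq; lia).
      rewrite bin_zero by lia. ring.
  - rewrite zsum_nil by lia. replace (i =? 0)%Z with false by (symmetry; apply Z.eqb_neq; lia). reflexivity.
Qed.

Lemma T_lone a : LSeq (lsubst lone a) lone.
Proof. apply T_lconst. Qed.

Lemma zsum_ind_lo a b l F : (a <= l <= b + 1)%Z ->
  zsum a b (fun j => if (l <=? j)%Z then F j else 0) = zsum l b F.
Proof.
  intros H. rewrite (zsum_split a l b) by lia.
  rewrite zsum_zero by (intros j Hj; replace (l <=? j)%Z with false by (symmetry; apply Z.leb_gt; lia); reflexivity).
  rewrite Rplus_0_l. apply zsum_ext. intros j Hj. replace (l <=? j)%Z with true by (symmetry; apply Z.leb_le; lia). reflexivity.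
Qed.

Lemma zsum0_nsum m G : zsum 0 (Z.of_nat m) G = nsum (S m) (fun r => G (Z.of_nat r)).
Proof.
  unfold zsum, nsum. replace (Z.to_nat (Z.of_nat m - 0 + 1)) with (S m) by lia. reflexivity.
Qed.

Lemma vandermondeZ j1 j2 i : (i <= j1 + j2)%Z ->
  zsum (i - j2) j1 (fun l => bin (IZR j1) (Z.to_nat (j1 - l)) * bin (IZR j2) (Z.to_nat (j2 - (i - l))))
  = bin (IZR (j1 + j2)) (Z.to_nat (j1 + j2 - i)).
Proof.
  intros H. set (m := Z.to_nat (j1 + j2 - i)).
  set (F := fun l => bin (IZR j1) (Z.to_nat (j1 - l)) * bin (IZR j2) (Z.to_nat (j2 - (i - l)))).
  transitivity (zsum 0 (Z.of_nat m) (fun r => F (j1 - r)%Z)).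
  - etransitivity; [|symmetry; apply (zsum_refl 0 (Z.of_nat m) j1 F)]. f_equal; subst m; lia.
  - rewrite zsum0_nsum, plus_IZR, <- vandermonde. apply nsum_ext. intros r Hr.
    unfold F. f_equal; f_equal; lia.
Qed.

Lemma T_lmul f g a : LSeq (lsubst (lmul f g) a) (lmul (lsubst f a) (lsubst g a)).
Proof.
  intros i s t.
  set (A := - a s t). set (df := ldeg f). set (dg := ldeg g).
  set (F := fun j => coef f j s t). set (G := fun j => coef g j s t).
  set (W := fun j1 j2 => if (i <=? j1 + j2)%Z then
        F j1 * G j2 * A ^ (Z.to_nat (j1 + j2 - i)) * bin (IZR (j1 + j2)) (Z.to_nat (j1 + j2 - i)) else 0).
  transitivity (zsum (i - dg) df (fun j1 => zsum (i - df) dg (fun j2 => W j1 j2))).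
  - rewrite (coefT _ a i s t (df + dg)) by (simpl; lia). fold A.
    transitivity (zsum i (df + dg) (fun n => zsum (i - dg) df (fun j1 =>
        bin (IZR n) (Z.to_nat (n - i)) * A ^ Z.to_nat (n - i) * (F j1 * G (n - j1)%Z)))).
    { apply zsum_ext. intros n Hn. rewrite zsum_scal. f_equal.
      apply coef_lmul; lia. }
    rewrite zsum_swap. apply zsum_ext. intros j1 Hj1.
    rewrite (zsum_shift' (i - df) dg j1).
    transitivity (zsum i (df + dg) (fun n => W j1 (n - j1)%Z)).
    + apply zsum_ext. intros n Hn. unfold W.
      replace (i <=? j1 + (n - j1))%Z with true by (symmetry; apply Z.leb_le; lia).
      replace (j1 + (n - j1))%Z with n by lia. ring.
    + apply (zsum_win2 _ _ _ _ i (dg + j1)); try lia.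
      intros n [Hn|Hn]; unfold W.
      * replace (i <=? j1 + (n - j1))%Z with false by (symmetry; apply Z.leb_gt; lia). reflexivity.
      * destruct (i <=? j1 + (n - j1))%Z; [|reflexivity]. unfold G. rewrite (coef_above g) by lia. ring.
  - rewrite (coef_lmul _ _ i s t (i - dg) df) by (simpl; lia).
    transitivity (zsum (i - dg) df (fun l => zsum (i - dg) df (fun j1 => zsum (i - df) dg (fun j2 =>
       (if (l <=? j1)%Z then bin (IZR j1) (Z.to_nat (j1 - l)) * A ^ Z.to_nat (j1 - l) * F j1 else 0) *
       (if (i - l <=? j2)%Z then bin (IZR j2) (Z.to_nat (j2 - (i - l))) * A ^ Z.to_nat (j2 - (i - l)) * G j2 else 0))))).
    2:{ apply zsum_ext. intros l Hl.
        rewrite (coefT f a l s t df) by lia. rewrite (coefT g a (i - l) s t dg) by lia. fold A.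
        rewrite <- (zsum_ind_lo (i - dg) df l) by lia.
        rewrite <- (zsum_ind_lo (i - df) dg (i - l)) by lia.
        rewrite <- zsum_scal_r. apply zsum_ext. intros j1 Hj1.
        rewrite <- zsum_scal. reflexivity. }
    symmetry. rewrite zsum_swap. apply zsum_ext. intros j1 Hj1.
    rewrite zsum_swap. apply zsum_ext. intros j2 Hj2.
    symmetry. unfold W. destruct (Z_le_gt_dec i (j1 + j2)) as [Hle|Hgt].
    + replace (i <=? j1 + j2)%Z with true by (symmetry; apply Z.leb_le; lia).
      rewrite <- vandermondeZ by lia.
      rewrite (zsum_win (i - dg) df (i - j2) j1); try lia.
      * rewrite <- zsum_scal. apply zsum_ext. intros l Hl.
        replace (l <=? j1)%Z with true by (symmetry; apply Z.leb_le; lia).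
        replace (i - l <=? j2)%Z with true by (symmetry; apply Z.leb_le; lia).
        replace (Z.to_nat (j1 + j2 - i)) with (Z.to_nat (j1 - l) + Z.to_nat (j2 - (i - l)))%nat by lia.
        rewrite pow_add. ring.
      * intros l [Hl|Hl].
        -- replace (i - l <=? j2)%Z with false by (symmetry; apply Z.leb_gt; lia). ring.
        -- replace (l <=? j1)%Z with false by (symmetry; apply Z.leb_gt; lia). ring.
    + replace (i <=? j1 + j2)%Z with false by (symmetry; apply Z.leb_gt; lia).
      symmetry. apply zsum_zero. intros l Hl.
      destruct (Z_le_gt_dec l j1) as [Hl1|Hl1].
      * replace (i - l <=? j2)%Z with false by (symmetry; apply Z.leb_gt; lia). ring.
      * replace (l <=? j1)%Z with false by (symmetry; apply Z.leb_gt; lia). ring.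
Qed.

Lemma T_lpow f a n : LSeq (lsubst (lpow f n) a) (lpow (lsubst f a) n).
Proof. induction n; simpl. apply T_lone. rewrite T_lmul, IHn. reflexivity. Qed.

Lemma bin_shift_id j i : (i + 1 <= j)%Z ->
  IZR (i + 1) * bin (IZR j) (Z.to_nat (j - (i + 1))) = IZR j * bin (IZR (j - 1)) (Z.to_nat (j - 1 - i)).
Proof.
  intros H. replace (Z.to_nat (j - 1 - i)) with (Z.to_nat (j - (i + 1))) by lia.
  rewrite minus_IZR, <- bin_b3, Rmult_comm. f_equal.
  rewrite INR_IZR_INZ, Z2Nat.id by lia. rewrite <- minus_IZR. f_equal. lia.
Qed.

Lemma T_ldk f a : LSeq (ldk (lsubst f a)) (lsubst (ldk f) a).
Proof.
  intros i s t. rewrite coef_ldk.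
  rewrite (coefT _ a (i+1) s t (ldeg f)) by lia.
  rewrite (coefT _ a i s t (ldeg f)) by (simpl; lia).
  rewrite (zsum_shift' i (ldeg f) 1).
  rewrite (zsum_ext_hi (i+1) (ldeg f) (ldeg f + 1)); [|lia|].
  2:{ intros j Hj. rewrite coef_ldk. replace (j - 1 + 1)%Z with j by lia. rewrite (coef_above f) by lia. ring. }
  rewrite <- zsum_scal. apply zsum_ext. intros j Hj. rewrite coef_ldk.
  replace (j - 1 + 1)%Z with j by lia.
  replace (Z.to_nat (j - 1 - i)) with (Z.to_nat (j - (i + 1))) by lia.
  transitivity ((IZR (i + 1) * bin (IZR j) (Z.to_nat (j - (i + 1)))) * (- a s t) ^ Z.to_nat (j - (i + 1)) * coef f j s t); [ring|].
  rewrite bin_shift_id by lia.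
  replace (Z.to_nat (j - 1 - i)) with (Z.to_nat (j - (i + 1))) by lia. ring.
Qed.

Lemma peval_zsum f b s t : peval f b s t = zsum 0 (ldeg f) (fun j => coef f j s t * (b s t) ^ (Z.to_nat j)).
Proof. reflexivity. Qed.

Lemma T_lpos F a : LSeq (lpos (lsubst F a))
    (lsub (lsubst (lpos F) a) (lconst (peval (lpos F) (fopp a)))).
Proof.
  intros i s t. rewrite coef_lpos, coef_lsub, coef_lconst.
  rewrite (coefT (lpos F) a i s t (ldeg F)) by (simpl; lia).
  destruct (Z_lt_le_dec 0 i) as [Hi|Hi].
  - replace (0 <? i)%Z with true by (symmetry; apply Z.ltb_lt; lia).
    replace (i =? 0)%Z with false by (symmetry; apply Z.eqb_neq; lia).
    rewrite (coefT F a i s t (ldeg F)) by lia. rewrite Rminus_0_r.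
    apply zsum_ext. intros j Hj. rewrite coef_lpos. replace (0 <? j)%Z with true by (symmetry; apply Z.ltb_lt; lia). reflexivity.
  - replace (0 <? i)%Z with false by (symmetry; apply Z.ltb_ge; lia).
    destruct (Z.eq_dec i 0) as [->|Hne].
    + simpl (0 =? 0)%Z. rewrite peval_zsum. simpl (ldeg (lpos F)).
      rewrite <- (Rminus_diag (zsum 0 (ldeg F) (fun j => coef (lpos F) j s t * fopp a s t ^ Z.to_nat j))).
      f_equal. apply zsum_ext. intros j Hj.
      replace (IZR j) with (INR (Z.to_nat (j - 0))) by (rewrite INR_IZR_INZ; f_equal; lia).
      rewrite bin_diag. unfold fopp. replace (j - 0)%Z with j by lia. ring.
    + replace (i =? 0)%Z with false by (symmetry; apply Z.eqb_neq; lia).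
      rewrite zsum_zero; [ring|]. intros j Hj. rewrite coef_lpos.
      destruct (Z_lt_le_dec 0 j).
      * rewrite bin_zero by lia. ring.
      * replace (0 <? j)%Z with false by (symmetry; apply Z.ltb_ge; lia). ring.
Qed.

Definition line (d : dir) (f : CF) (s : R) (t : nat -> R) : R -> R := fun y => apply_dir d y f s t.
Definition ed (d : dir) (f : CF) (s : R) (t : nat -> R) : Prop := ex_derive (line d f s t) (coord d s t).

Lemma dderiv_line d f s t : dderiv d f s t = Derive (line d f s t) (coord d s t).
Proof. reflexivity. Qed.

Lemma line_ext d f g s t : (forall s t, f s t = g s t) -> line d f s t = line d g s t.
Proof. intros H. extensionality y. unfold line. destruct d; simpl; apply H. Qed.

Lemma dd_ext d f g s t : (forall s t, f s t = g s t) -> dderiv d f s t = dderiv d g s t.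
Proof. intros H. rewrite !dderiv_line, (line_ext d f g s t H). reflexivity. Qed.
Lemma ed_ext d f g s t : (forall s t, f s t = g s t) -> ed d f s t -> ed d g s t.
Proof. intros H. unfold ed. rewrite (line_ext d f g s t H). auto. Qed.

Ltac lined := intros; extensionality y; unfold line; match goal with dd : dir |- _ => destruct dd end; reflexivity.

Lemma line_add d f g s t : line d (fun s t => f s t + g s t) s t = fun y => line d f s t y + line d g s t y. Proof. lined. Qed.
Lemma line_mul d f g s t : line d (fun s t => f s t * g s t) s t = fun y => line d f s t y * line d g s t y. Proof. lined. Qed.
Lemma line_opp d f s t : line d (fun s t => - f s t) s t = fun y => - line d f s t y. Proof. lined. Qed.
Lemma line_scal d c f s t : line d (fun s t => c * f s t) s t = fun y => c * line d f s t y. Proof. lined. Qed.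
Lemma line_pow d f m s t : line d (fun s t => f s t ^ m) s t = fun y => line d f s t y ^ m. Proof. lined. Qed.
Lemma line_div d f g s t : line d (fun s t => f s t / g s t) s t = fun y => line d f s t y / line d g s t y. Proof. lined. Qed.
Lemma line_comp d (h : R -> R) f s t : line d (fun s t => h (f s t)) s t = fun y => h (line d f s t y). Proof. lined. Qed.
Lemma line_const d c s t : line d (fun _ _ => c) s t = fun _ => c. Proof. lined. Qed.
Lemma line_at d f s t : line d f s t (coord d s t) = f s t.
Proof. unfold line. destruct d; simpl. reflexivity. f_equal. extensionality j. unfold upd. destruct (Nat.eqb_spec j i); subst; reflexivity. Qed.

Lemma ed_add d f g s t : ed d f s t -> ed d g s t -> ed d (fun s t => f s t + g s t) s t.
Proof. unfold ed. rewrite line_add. intros. apply (ex_derive_plus (line d f s t) (line d g s t)); auto. Qed.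
Lemma dd_add d f g s t : ed d f s t -> ed d g s t -> dderiv d (fun s t => f s t + g s t) s t = dderiv d f s t + dderiv d g s t.
Proof. unfold ed. intros. rewrite !dderiv_line, line_add. apply Derive_plus; auto. Qed.
Lemma ed_mul d f g s t : ed d f s t -> ed d g s t -> ed d (fun s t => f s t * g s t) s t.
Proof. unfold ed. rewrite line_mul. intros. apply (ex_derive_mult (line d f s t) (line d g s t)); auto. Qed.
Lemma dd_mul d f g s t : ed d f s t -> ed d g s t ->
  dderiv d (fun s t => f s t * g s t) s t = dderiv d f s t * g s t + f s t * dderiv d g s t.
Proof. unfold ed. intros. rewrite !dderiv_line, line_mul, Derive_mult by auto. rewrite !line_at. reflexivity. Qed.
Lemma ed_opp d f s t : ed d f s t -> ed d (fun s t => - f s t) s t.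
Proof. unfold ed. rewrite line_opp. intros. apply (ex_derive_opp (line d f s t)); auto. Qed.
Lemma dd_opp d f s t : dderiv d (fun s t => - f s t) s t = - dderiv d f s t.
Proof. rewrite !dderiv_line, line_opp. apply Derive_opp. Qed.
Lemma ed_scal d c f s t : ed d f s t -> ed d (fun s t => c * f s t) s t.
Proof. unfold ed. rewrite line_scal. intros. apply (ex_derive_scal (line d f s t)); auto. Qed.
Lemma dd_scal d c f s t : dderiv d (fun s t => c * f s t) s t = c * dderiv d f s t.
Proof. rewrite !dderiv_line, line_scal. apply Derive_scal. Qed.
Lemma ed_const d c s t : ed d (fun _ _ => c) s t.
Proof. unfold ed. rewrite line_const. apply ex_derive_const. Qed.
Lemma dd_const d c s t : dderiv d (fun _ _ => c) s t = 0.
Proof. rewrite dderiv_line, line_const. apply Derive_const. Qed.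
Lemma ed_pow d f m s t : ed d f s t -> ed d (fun s t => f s t ^ m) s t.
Proof. unfold ed. rewrite line_pow. intros. apply ex_derive_pow; auto. Qed.
Lemma dd_pow d f m s t : ed d f s t ->
  dderiv d (fun s t => f s t ^ m) s t = INR m * dderiv d f s t * f s t ^ (pred m).
Proof. unfold ed. intros. rewrite !dderiv_line, line_pow, Derive_pow by auto. rewrite line_at. reflexivity. Qed.
Lemma ed_div d f g s t : ed d f s t -> ed d g s t -> g s t <> 0 -> ed d (fun s t => f s t / g s t) s t.
Proof. unfold ed. rewrite line_div. intros. apply ex_derive_div; auto. rewrite line_at; auto. Qed.
Lemma dd_div d f g s t : ed d f s t -> ed d g s t -> g s t <> 0 ->
  dderiv d (fun s t => f s t / g s t) s t = (dderiv d f s t * g s t - f s t * dderiv d g s t) / (g s t) ^ 2.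
Proof. unfold ed. intros. rewrite !dderiv_line, line_div, Derive_div by (auto; rewrite line_at; auto). rewrite !line_at. reflexivity. Qed.
Lemma ed_exp d f s t : ed d f s t -> ed d (fun s t => exp (f s t)) s t.
Proof.
  unfold ed. rewrite line_comp. intros H.
  apply (ex_derive_comp exp (line d f s t)); auto. apply ex_derive_Reals_1. apply derivable_pt_exp.
Qed.
Lemma dd_exp d f s t : ed d f s t -> dderiv d (fun s t => exp (f s t)) s t = dderiv d f s t * exp (f s t).
Proof.
  unfold ed. intros H. rewrite !dderiv_line, line_comp.
  rewrite Derive_comp; auto. rewrite line_at. f_equal. apply is_derive_unique. apply is_derive_exp.
  apply ex_derive_Reals_1. apply derivable_pt_exp.
Qed.

Lemma is_derive_lnabs x : x <> 0 -> is_derive (fun y => ln (Rabs y)) x (/ x).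
Proof.
  intros Hx. destruct (Rlt_or_le 0 x) as [Hp|Hn].
  - apply (is_derive_ext_loc ln). 
    + apply (locally_interval _ x 0 p_infty); simpl; auto. intros y Hy _. rewrite Rabs_pos_eq by lra. reflexivity.
    + apply is_derive_ln; auto.
  - assert (Hneg : x < 0) by lra.
    apply (is_derive_ext_loc (fun y => ln (- y))).
    + apply (locally_interval _ x m_infty 0); simpl; auto. intros y _ Hy. rewrite Rabs_left by lra. reflexivity.
    + auto_derive. lra. field. lra.
Qed.

Lemma ed_lnabs d f s t : ed d f s t -> f s t <> 0 -> ed d (fun s t => ln (Rabs (f s t))) s t.
Proof.
  unfold ed. rewrite (line_comp d (fun y => ln (Rabs y)) f s t). intros H Hf.
  apply (ex_derive_comp (fun y => ln (Rabs y)) (line d f s t)); auto.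
  rewrite line_at. eexists. apply is_derive_lnabs; auto.
Qed.
Lemma dd_lnabs d f s t : ed d f s t -> f s t <> 0 ->
  dderiv d (fun s t => ln (Rabs (f s t))) s t = dderiv d f s t / f s t.
Proof.
  unfold ed. intros H Hf. rewrite !dderiv_line, (line_comp d (fun y => ln (Rabs y)) f s t).
  rewrite (Derive_comp (fun y => ln (Rabs y)) (line d f s t)); auto. rewrite line_at. unfold Rdiv. f_equal. apply is_derive_unique. apply is_derive_lnabs; auto.
  rewrite line_at. eexists. apply is_derive_lnabs; auto.
Qed.

Lemma line_zsum d a b F s t :
  line d (fun s t => zsum a b (fun j => F j s t)) s t = fun y => zsum a b (fun j => line d (F j) s t y).
Proof. lined. Qed.

Lemma zsum_derive a b (G : Z -> R -> R) x :
  (forall j, (a <= j <= b)%Z -> ex_derive (G j) x) ->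
  ex_derive (fun y => zsum a b (fun j => G j y)) x /\
  Derive (fun y => zsum a b (fun j => G j y)) x = zsum a b (fun j => Derive (G j) x).
Proof.
  revert a b. apply (zsum_ind (fun a b => (forall j, (a <= j <= b)%Z -> ex_derive (G j) x) ->
  ex_derive (fun y => zsum a b (fun j => G j y)) x /\
  Derive (fun y => zsum a b (fun j => G j y)) x = zsum a b (fun j => Derive (G j) x))).
  - intros a b H _. split.
    + apply (ex_derive_ext (fun _ => 0)). intros; rewrite zsum_nil; auto. apply ex_derive_const.
    + rewrite zsum_nil by auto. rewrite (Derive_ext _ (fun _ => 0)). apply Derive_const. intros; rewrite zsum_nil; auto.
  - intros a b Hab IH H.
    destruct IH as [IH1 IH2]. intros; apply H; lia.
    split.
    + apply (ex_derive_ext (fun y => G a y + zsum (a+1) b (fun j => G j y))).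
      intros; rewrite (zsum_first a b) by auto; reflexivity.
      apply (ex_derive_plus (G a) (fun y => zsum (a+1) b (fun j => G j y))); auto. apply H; lia.
    + rewrite (Derive_ext _ (fun y => G a y + zsum (a+1) b (fun j => G j y))).
      rewrite Derive_plus; auto. rewrite IH2, (zsum_first a b) by auto. reflexivity. apply H; lia.
      intros; rewrite (zsum_first a b) by auto; reflexivity.
Qed.

Lemma ed_zsum d a b F s t : (forall j, (a <= j <= b)%Z -> ed d (F j) s t) ->
  ed d (fun s t => zsum a b (fun j => F j s t)) s t.
Proof. unfold ed. intros H. rewrite line_zsum. apply zsum_derive. auto. Qed.
Lemma dd_zsum d a b F s t : (forall j, (a <= j <= b)%Z -> ed d (F j) s t) ->
  dderiv d (fun s t => zsum a b (fun j => F j s t)) s t = zsum a b (fun j => dderiv d (F j) s t).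
Proof. unfold ed. intros H. rewrite dderiv_line, line_zsum. apply zsum_derive. auto. Qed.

Definition gd (d : dir) (f : CF) : Prop := forall s t, ed d f s t.
Definition gLS (d : dir) (f : LS) : Prop := forall j, gd d (coef f j).

Lemma coef_lmul_fun f g j lo hi : (lo <= j - ldeg g)%Z -> (ldeg f <= hi)%Z ->
  coef (lmul f g) j = fun s t => zsum lo hi (fun i => coef f i s t * coef g (j - i) s t).
Proof. intros. extensionality s. extensionality t. apply coef_lmul; auto. Qed.

Lemma coef_lsubst_fun f a i hi : (ldeg f <= hi)%Z ->
  coef (lsubst f a) i = fun s t =>
  zsum i hi (fun j => bin (IZR j) (Z.to_nat (j - i)) * (- a s t) ^ (Z.to_nat (j - i)) * coef f j s t).
Proof. intros. extensionality s. extensionality t. apply coefT; auto. Qed.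

Lemma gLS_ladd d f g : gLS d f -> gLS d g -> gLS d (ladd f g).
Proof. unfold gLS, gd in *. intros Hf Hg j s t. eapply ed_ext. intros; symmetry; apply coef_ladd. apply ed_add; auto. Qed.
Lemma gLS_lopp d f : gLS d f -> gLS d (lopp f).
Proof. unfold gLS, gd in *. intros Hf j s t. eapply ed_ext. intros; symmetry; apply coef_lopp. apply ed_opp; auto. Qed.
Lemma gLS_lsub d f g : gLS d f -> gLS d g -> gLS d (lsub f g).
Proof. intros. apply gLS_ladd; auto. apply gLS_lopp; auto. Qed.
Lemma gLS_lmul d f g : gLS d f -> gLS d g -> gLS d (lmul f g).
Proof.
  unfold gLS, gd in *. intros Hf Hg j s t. rewrite (coef_lmul_fun f g j (j - ldeg g) (ldeg f)) by lia.
  apply ed_zsum. intros. apply ed_mul; auto.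
Qed.
Lemma gLS_lconst d c : gd d c -> gLS d (lconst c).
Proof.
  unfold gLS, gd in *. intros Hc j s t. eapply ed_ext. intros; symmetry; apply coef_lconst.
  destruct (j =? 0)%Z. apply Hc. apply ed_const.
Qed.
Lemma gLS_lmono d k c : gd d c -> gLS d (lmono k c).
Proof.
  unfold gLS, gd in *. intros Hc j s t. eapply ed_ext. intros; symmetry; apply coef_lmono.
  destruct (j =? k)%Z. apply Hc. apply ed_const.
Qed.
Lemma gLS_lone d : gLS d lone.
Proof. apply gLS_lconst. intros s t. apply ed_const. Qed.
Lemma gLS_lpow d f n : gLS d f -> gLS d (lpow f n).
Proof. intros H. induction n; simpl. apply gLS_lone. apply gLS_lmul; auto. Qed.
Lemma gLS_lpos d f : gLS d f -> gLS d (lpos f).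
Proof.
  unfold gLS, gd in *. intros Hf j s t. eapply ed_ext. intros; symmetry; apply coef_lpos.
  destruct (0 <? j)%Z. apply Hf. apply ed_const.
Qed.
Lemma gLS_ldk d f : gLS d f -> gLS d (ldk f).
Proof.
  unfold gLS, gd in *. intros Hf j s t. eapply ed_ext. intros; symmetry; apply coef_ldk. apply ed_scal. apply Hf.
Qed.
Lemma gLS_lsubst d f a : gLS d f -> gd d a -> gLS d (lsubst f a).
Proof.
  unfold gLS, gd in *. intros Hf Ha j s t. rewrite (coef_lsubst_fun f a j (ldeg f)) by lia.
  apply ed_zsum. intros. apply ed_mul; auto. apply ed_scal. apply ed_pow. apply ed_opp. apply Ha.
Qed.
Lemma gLS_Bn d f n : gLS d f -> gLS d (Bn f n).
Proof. intros. apply gLS_lpos, gLS_lpow; auto. Qed.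

Section Der.
Variable d : dir.
Notation D := (dderiv d).

Lemma lmap_add f g : gLS d f -> gLS d g -> LSeq (lmap D (ladd f g)) (ladd (lmap D f) (lmap D g)).
Proof.
  unfold gLS, gd in *. intros Hf Hg j s t. rewrite coef_ladd, !coef_lmapd.
  rewrite (dd_ext _ _ (fun s t => coef f j s t + coef g j s t)) by (intros; apply coef_ladd).
  apply dd_add; auto.
Qed.

Lemma lmap_opp f : LSeq (lmap D (lopp f)) (lopp (lmap D f)).
Proof.
  intros j s t. rewrite coef_lopp, !coef_lmapd.
  rewrite (dd_ext _ _ (fun s t => - coef f j s t)) by (intros; apply coef_lopp).
  apply dd_opp.
Qed.

Lemma lmap_sub f g : gLS d f -> gLS d g -> LSeq (lmap D (lsub f g)) (lsub (lmap D f) (lmap D g)).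
Proof. intros. unfold lsub. rewrite lmap_add, lmap_opp. reflexivity. auto. apply gLS_lopp; auto. Qed.

Lemma lmap_mul f g : gLS d f -> gLS d g ->
  LSeq (lmap D (lmul f g)) (ladd (lmul (lmap D f) g) (lmul f (lmap D g))).
Proof.
  unfold gLS, gd in *. intros Hf Hg j s t. rewrite coef_ladd, !coef_lmapd.
  rewrite (coef_lmul_fun f g j (j - ldeg g) (ldeg f)) by lia.
  rewrite dd_zsum by (intros; apply ed_mul; auto).
  rewrite (coef_lmul (lmap D f) g j s t (j - ldeg g) (ldeg f)) by (simpl; lia).
  rewrite (coef_lmul f (lmap D g) j s t (j - ldeg g) (ldeg f)) by (simpl; lia).
  rewrite <- zsum_plus. apply zsum_ext. intros i Hi. rewrite !coef_lmapd.
  apply dd_mul; auto.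
Qed.

Lemma lmap_const c : LSeq (lmap D (lconst c)) (lconst (D c)).
Proof.
  intros j s t. rewrite coef_lmapd, coef_lconst.
  rewrite (dd_ext _ _ (fun s t => if (j =? 0)%Z then c s t else 0)) by (intros; apply coef_lconst).
  destruct (j =? 0)%Z. reflexivity. apply dd_const.
Qed.

Lemma lmap_mono k c : LSeq (lmap D (lmono k c)) (lmono k (D c)).
Proof.
  intros j s t. rewrite coef_lmapd, coef_lmono.
  rewrite (dd_ext _ _ (fun s t => if (j =? k)%Z then c s t else 0)) by (intros; apply coef_lmono).
  destruct (j =? k)%Z. reflexivity. apply dd_const.
Qed.

Lemma lmul_const_l' c g : LSeq (lmul (lconst c) g) (lmap (fun h => fmul c h) g).
Proof.
  intros j s t. rewrite lmul_const_l. rewrite coef_lmap. reflexivity. unfold fmul, fzero. ring.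
Qed.

(** chain rule for the substitution *)
Lemma lmap_subst f a : gLS d f -> gd d a ->
  LSeq (lmap D (lsubst f a)) (ladd (lsubst (lmap D f) a) (lmul (lconst (fopp (D a))) (lsubst (ldk f) a))).
Proof.
  unfold gLS, gd in *. intros Hf Ha i s t. rewrite coef_ladd, coef_lmapd, lmul_const_l.
  rewrite (coefT (ldk f) a i s t (ldeg f)) by (simpl; lia).
  rewrite (zsum_shift' i (ldeg f) 1).
  rewrite (zsum_ext_hi (i+1) (ldeg f) (ldeg f + 1)); [|lia|].
  2:{ intros j Hj. cbv beta. rewrite coef_ldk. replace (j - 1 + 1)%Z with j by lia. rewrite (coef_above f) by lia. ring. }
  rewrite (coef_lsubst_fun f a i (ldeg f)) by lia.
  rewrite dd_zsum by (intros; apply ed_mul; auto; apply ed_scal, ed_pow, ed_opp, Ha).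
  rewrite (coefT (lmap D f) a i s t (ldeg f)) by (simpl; lia).
  destruct (Z_le_gt_dec i (ldeg f)) as [Hi|Hi].
  2:{ rewrite !zsum_nil by lia. unfold fopp. ring. }
  rewrite (zsum_first i (ldeg f)) by lia.
  rewrite (zsum_first i (ldeg f) (fun j => _ * coef (lmap D f) j s t)) by lia.
  replace (i - i)%Z with 0%Z by lia. simpl Z.to_nat.
  rewrite Rplus_assoc. f_equal.
  { rewrite (dd_ext _ _ (fun s t => bin (IZR i) 0 * coef f i s t)) by (intros; simpl; ring).
    rewrite dd_scal, coef_lmapd. simpl. ring. }
  rewrite <- zsum_scal, <- zsum_plus.
  apply zsum_ext. intros j Hj.
  rewrite dd_mul by (auto; apply ed_scal, ed_pow, ed_opp, Ha).
  rewrite dd_scal, dd_pow by (apply ed_opp, Ha). rewrite dd_opp, coef_lmapd, coef_ldk.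
  replace (j - 1 + 1)%Z with j by lia. unfold fopp.
  replace (Z.to_nat (j - 1 - i)) with (Z.to_nat (j - (i+1))) by lia.
  assert (Em : Z.to_nat (j - i) = S (Z.to_nat (j - (i+1)))) by lia. rewrite Em. simpl pred.
  set (m := Z.to_nat (j - (i+1))).
  transitivity (bin (IZR j) (S m) * (- a s t) ^ S m * dderiv d (coef f j) s t +
     (bin (IZR j) (S m) * INR (S m)) * - dderiv d a s t * (- a s t) ^ m * coef f j s t); [ring|].
  rewrite bin_b2, minus_IZR. ring.
Qed.
End Der.

Lemma ldk_add f g : LSeq (ldk (ladd f g)) (ladd (ldk f) (ldk g)).
Proof. intros j s t. rewrite coef_ladd, !coef_ldk, coef_ladd. ring. Qed.
Lemma ldk_opp f : LSeq (ldk (lopp f)) (lopp (ldk f)).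
Proof. intros j s t. rewrite coef_lopp, !coef_ldk, coef_lopp. ring. Qed.
Lemma ldk_const c : LSeq (ldk (lconst c)) lzero.
Proof. intros j s t. rewrite coef_ldk, coef_lconst, coef_lzero. destruct (j + 1 =? 0)%Z eqn:E.
  apply Z.eqb_eq in E. replace (j+1)%Z with 0%Z. simpl. ring. ring. Qed.
Lemma ldk_mono k c : LSeq (ldk (lmono k c)) (lmono (k - 1) (fscal (IZR k) c)).
Proof. intros j s t. rewrite coef_ldk, !coef_lmono. destruct (Z.eqb_spec (j+1) k); destruct (Z.eqb_spec j (k-1)); try lia.
  unfold fscal. subst. reflexivity. ring. Qed.

Lemma ldk_mul f g : LSeq (ldk (lmul f g)) (ladd (lmul (ldk f) g) (lmul f (ldk g))).
Proof.
  intros j s t. rewrite coef_ladd, coef_ldk.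
  rewrite (coef_lmul f g (j+1) s t (j - ldeg g) (ldeg f)) by lia.
  rewrite (coef_lmul (ldk f) g j s t (j - ldeg g - 1) (ldeg f)) by (simpl; lia).
  rewrite (coef_lmul f (ldk g) j s t (j - ldeg g) (ldeg f)) by (simpl; lia).
  rewrite (zsum_shift' (j - ldeg g - 1) (ldeg f) 1).
  rewrite (zsum_ext_hi (j - ldeg g - 1 + 1) (ldeg f) (ldeg f + 1)); [|lia|].
  2:{ intros i Hi. rewrite coef_ldk. replace (i - 1 + 1)%Z with i by lia. rewrite (coef_above f) by lia. ring. }
  replace (j - ldeg g - 1 + 1)%Z with (j - ldeg g)%Z by lia.
  rewrite <- zsum_scal, <- zsum_plus. apply zsum_ext. intros i Hi.
  rewrite !coef_ldk. replace (i - 1 + 1)%Z with i by lia.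
  replace (j - (i - 1))%Z with (j + 1 - i)%Z by lia. replace (j - i + 1)%Z with (j + 1 - i)%Z by lia.
  rewrite !minus_IZR, !plus_IZR. ring.
Qed.

Lemma lconst_mul a b : LSeq (lmul (lconst a) (lconst b)) (lconst (fmul a b)).
Proof. intros j s t. rewrite lmul_const_l, !coef_lconst. destruct (j =? 0)%Z; unfold fmul; ring. Qed.
Lemma lconst_add a b : LSeq (ladd (lconst a) (lconst b)) (lconst (fadd a b)).
Proof. intros j s t. rewrite coef_ladd, !coef_lconst. destruct (j =? 0)%Z; unfold fadd; ring. Qed.
Lemma lconst_opp a : LSeq (lopp (lconst a)) (lconst (fopp a)).
Proof. intros j s t. rewrite coef_lopp, !coef_lconst. destruct (j =? 0)%Z; unfold fopp; ring. Qed.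
Lemma lconst_ext a b : (forall s t, a s t = b s t) -> LSeq (lconst a) (lconst b).
Proof. intros H j s t. rewrite !coef_lconst. destruct (j =? 0)%Z; auto. Qed.
Lemma lconst_zero : LSeq (lconst (fconst 0)) lzero. Proof. reflexivity. Qed.
Lemma lconst_one : LSeq (lconst (fconst 1)) lone. Proof. reflexivity. Qed.

Record deriv_ok (dl : LS -> LS) (G : LS -> Prop) : Prop := {
  dk_mor : forall f g, LSeq f g -> LSeq (dl f) (dl g);
  dk_add : forall f g, G f -> G g -> LSeq (dl (ladd f g)) (ladd (dl f) (dl g));
  dk_mul : forall f g, G f -> G g -> LSeq (dl (lmul f g)) (ladd (lmul (dl f) g) (lmul f (dl g)));
  dk_const : forall c : R, LSeq (dl (lconst (fconst c))) lzero;
  dk_loc : forall f g j, (forall i s t, (j <= i)%Z -> coef f i s t = coef g i s t) ->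
                         forall s t, coef (dl f) j s t = coef (dl g) j s t;
  dk_deg : forall f, (ldeg (dl f) <= ldeg f)%Z;
  G_add : forall f g, G f -> G g -> G (ladd f g);
  G_mul : forall f g, G f -> G g -> G (lmul f g);
  G_const : forall c : R, G (lconst (fconst c))
}.

Definition cm (m : nat) : R := (-1) ^ (S m) / INR m.
Definition sg (m : nat) : LS := lconst (fconst ((-1) ^ m)).

Fixpoint LMs (q : LS) (M : nat) : LS :=
  match M with O => lzero | S M' => ladd (LMs q M') (lmul (lconst (fconst (cm (S M')))) (lpow q (S M'))) end.

Lemma sg_S m : LSeq (sg (S m)) (lopp (sg m)).
Proof. unfold sg. rewrite lconst_opp. apply lconst_ext. intros. unfold fopp, fconst. simpl. ring. Qed.

Lemma sg_0 : LSeq (sg 0) lone. Proof. reflexivity. Qed.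

Section LogD.
Variable dl : LS -> LS.
Variable G : LS -> Prop.
Variable Hd : deriv_ok dl G.
Variable q : LS.
Variable Gq : G q.

Lemma G_lpow m : G (lpow q m).
Proof. induction m; simpl. apply (G_const _ _ Hd 1). apply (G_mul _ _ Hd); auto. Qed.

Lemma G_LMs M : G (LMs q M).
Proof. induction M. apply (G_const _ _ Hd 0). apply (G_add _ _ Hd); auto. apply (G_mul _ _ Hd). apply (G_const _ _ Hd). apply G_lpow. Qed.

Lemma dl_lconst_mul c f : G f -> LSeq (dl (lmul (lconst (fconst c)) f)) (lmul (lconst (fconst c)) (dl f)).
Proof.
  intros Hf. rewrite (dk_mul _ _ Hd) by (auto; apply (G_const _ _ Hd)). rewrite (dk_const _ _ Hd). ring.
Qed.

Lemma dl_pow m : LSeq (dl (lpow q (S m))) (lmul (lconst (fconst (INR (S m)))) (lmul (lpow q m) (dl q))).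
Proof.
  induction m.
  - change (lpow q 1) with (lmul (lconst (fconst 1)) q). change (INR 1) with 1.
    rewrite dl_lconst_mul by auto. change (lpow q 0) with lone. rewrite lconst_one. ring.
  - change (lpow q (S (S m))) with (lmul (lpow q (S m)) q).
    rewrite (dk_mul _ _ Hd) by (auto; apply G_lpow). rewrite IHm.
    change (lpow q (S m)) with (lmul (lpow q m) q).
    transitivity (lmul (ladd (lconst (fconst (INR (S m)))) lone) (lmul (lmul (lpow q m) q) (dl q))); [ring|].
    rewrite <- lconst_one, lconst_add. apply lmul_mor; [|reflexivity].
    apply lconst_ext. intros. unfold fadd, fconst. rewrite (S_INR (S m)). ring.
Qed.

Fixpoint RMs (M : nat) : LS :=
  match M with O => lzero | S M' => ladd (RMs M') (lmul (sg M') (lmul (lpow q M') (dl q))) end.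

Lemma dl_LMs M : LSeq (dl (LMs q M)) (RMs M).
Proof.
  induction M; cbn [LMs RMs].
  - apply (dk_const _ _ Hd 0).
  - rewrite (dk_add _ _ Hd) by (apply G_LMs || (apply (G_mul _ _ Hd); [apply (G_const _ _ Hd)|apply G_lpow])).
    rewrite IHM. apply ladd_mor; [reflexivity|].
    rewrite dl_lconst_mul by apply G_lpow. rewrite dl_pow.
    transitivity (lmul (lmul (lconst (fconst (cm (S M)))) (lconst (fconst (INR (S M))))) (lmul (lpow q M) (dl q))); [ring|].
    rewrite lconst_mul. apply lmul_mor; [|reflexivity].
    apply lconst_ext. intros. unfold fmul, fconst, cm.
    replace ((-1) ^ S (S M)) with ((-1) ^ M) by (simpl; ring). field. apply not_0_INR. lia.
Qed.

Lemma RMs_tele M : LSeq (lmul (ladd lone q) (RMs M)) (lsub (dl q) (lmul (sg M) (lmul (lpow q M) (dl q)))).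
Proof.
  induction M; cbn [RMs].
  - change (lpow q 0) with lone. rewrite sg_0. ring.
  - transitivity (ladd (lmul (ladd lone q) (RMs M)) (lmul (ladd lone q) (lmul (sg M) (lmul (lpow q M) (dl q))))); [ring|].
    rewrite IHM, sg_S. change (lpow q (S M)) with (lmul (lpow q M) q). ring.
Qed.
End LogD.

Lemma coef_LMs q M j s t :
  coef (LMs q M) j s t = fold_right Rplus 0 (map (fun m => cm m * coef (lpow q m) j s t) (seq 1 M)).
Proof.
  induction M; cbn [LMs].
  - apply coef_lzero.
  - rewrite coef_ladd, IHM, lmul_const_l, seq_S, map_app, fold_Rplus_app. simpl. unfold fconst. ring.
Qed.

Lemma fold_zero_ext (F : nat -> R) l : (forall m, In m l -> F m = 0) -> fold_right Rplus 0 (map F l) = 0.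
Proof. induction l; simpl; intros H. reflexivity. rewrite H, IHl; auto. ring. Qed.

Lemma ldeg_qser N p : ldeg (qser N p) = (-1)%Z. Proof. reflexivity. Qed.

Lemma log1q_LMs N p M j s t : (- j <= Z.of_nat M)%Z ->
  coef (log1q N p) j s t = coef (LMs (qser N p) M) j s t.
Proof.
  intros HM. rewrite coef_LMs.
  assert (Hz : forall m, (- j < Z.of_nat m)%Z -> coef (lpow (qser N p) m) j s t = 0).
  { intros m Hm. apply coef_above. rewrite ldeg_lpow, ldeg_qser. lia. }
  destruct (Z_le_gt_dec j (-1)) as [Hj|Hj].
  - rewrite coef_below by (simpl; lia). simpl lco. unfold sumN.
    replace (S (Z.to_nat (- j)) - 1)%nat with (Z.to_nat (- j)) by lia.
    replace M with (Z.to_nat (- j) + (M - Z.to_nat (- j)))%nat by lia.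
    rewrite seq_app, map_app, fold_Rplus_app.
    rewrite (fold_zero_ext _ (seq (1 + Z.to_nat (- j)) _)).
    + rewrite Rplus_0_r. reflexivity.
    + intros m Hm. apply in_seq in Hm. rewrite Hz by lia. ring.
  - rewrite coef_above by (simpl; lia). symmetry. apply fold_zero_ext.
    intros m Hm. apply in_seq in Hm. rewrite Hz by lia. ring.
Qed.

Lemma LOG dl G (Hd : deriv_ok dl G) N p : G (qser N p) ->
  LSeq (lmul (ladd lone (qser N p)) (dl (log1q N p))) (dl (qser N p)).
Proof.
  intros Gq j s t. set (q := qser N p).
  set (M := (Z.to_nat (- j) + 1)%nat).
  set (Q := ladd lone q).
  transitivity (coef (lmul Q (dl (LMs q M))) j s t).
  - rewrite (coef_lmul Q _ j s t (j - Z.max (ldeg (dl (log1q N p))) (ldeg (dl (LMs q M)))) 0) by (simpl; lia).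
    rewrite (coef_lmul Q _ j s t (j - Z.max (ldeg (dl (log1q N p))) (ldeg (dl (LMs q M)))) 0) by (simpl; lia).
    apply zsum_ext. intros i Hi. f_equal. apply (dk_loc _ _ Hd).
    intros i' s' t' Hi'. apply log1q_LMs. lia.
  - rewrite (dl_LMs dl G Hd q Gq M), (RMs_tele dl q M).
    rewrite coef_lsub. unfold sg. rewrite lmul_const_l.
    rewrite (coef_above (lmul (lpow q M) (dl q))). ring.
    simpl ldeg. rewrite ldeg_lpow. pose proof (dk_deg _ _ Hd q). unfold q in *. rewrite ldeg_qser in *. lia.
Qed.

Lemma deriv_ok_lmap d : deriv_ok (lmap (dderiv d)) (gLS d).
Proof.
  constructor.
  - intros f g H. apply lmap_mor_Proper. auto.
  - apply lmap_add.
  - apply lmap_mul.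
  - intros c. rewrite lmap_const. apply lconst_ext. intros. unfold fconst. apply dd_const.
  - intros f g j H s t. rewrite !coef_lmapd. apply dd_ext. intros. apply H. lia.
  - intros f. simpl. lia.
  - apply gLS_ladd.
  - apply gLS_lmul.
  - intros c. apply gLS_lconst. intros s t. apply ed_const.
Qed.

Lemma deriv_ok_ldk : deriv_ok ldk (fun _ => True).
Proof.
  constructor; auto.
  - intros f g H. apply ldk_mor_Proper. auto.
  - intros. apply ldk_add.
  - intros. apply ldk_mul.
  - intros c. apply ldk_const.
  - intros f g j H s t. rewrite !coef_ldk. rewrite H by lia. reflexivity.
  - intros f. simpl. lia.
Qed.

Lemma lmul_mono_l k c g j s t : coef (lmul (lmono k c) g) j s t = c s t * coef g (j - k) s t.
Proof.
  rewrite (coef_lmul _ _ j s t (Z.min k (j - ldeg g)) (Z.max k (ldeg (lmono k c)))) by lia.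
  rewrite (zsum_delta _ _ k); try lia.
  - rewrite coef_lmono. rewrite Z.eqb_refl. reflexivity.
  - intros i Hi. rewrite coef_lmono. replace (i =? k)%Z with false by (symmetry; apply Z.eqb_neq; lia). ring.
Qed.
Lemma lmono_ext k a b : (forall s t, a s t = b s t) -> LSeq (lmono k a) (lmono k b).
Proof. intros H j s t. rewrite !coef_lmono. destruct (j =? k)%Z; auto. Qed.
Lemma lmono_mul k k' c c' : LSeq (lmul (lmono k c) (lmono k' c')) (lmono (k + k') (fmul c c')).
Proof.
  intros j s t. rewrite lmul_mono_l, !coef_lmono.
  destruct (Z.eqb_spec (j - k) k'); destruct (Z.eqb_spec j (k + k')); try lia; unfold fmul; ring.
Qed.
Lemma lmono_const k c e : LSeq (lmul (lmono k c) (lconst e)) (lmono k (fmul c e)).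
Proof.
  intros j s t. rewrite lmul_mono_l, coef_lconst, coef_lmono.
  destruct (Z.eqb_spec (j - k) 0); destruct (Z.eqb_spec j k); try lia; unfold fmul; ring.
Qed.

Definition pnz (p : nat -> CF) := forall s t, p 0%nat s t <> 0.

Lemma poly_factor N p : pnz p ->
  LSeq (polyLS N p) (lmul (lmono (Z.of_nat N) (p 0%nat)) (ladd lone (qser N p))).
Proof.
  intros Hp j s t. rewrite lmul_mono_l, coef_ladd, coef_lone.
  destruct (Z_le_gt_dec j (Z.of_nat N)) as [Hj|Hj].
  - rewrite coef_below by (simpl; lia). simpl lco.
    destruct (Z.eqb_spec j (Z.of_nat N)) as [E|E].
    + subst. rewrite Z.sub_diag. simpl. rewrite (coef_above (qser N p)) by (simpl; lia).
      replace (Z.to_nat (Z.of_nat N - Z.of_nat N)) with 0%nat by lia.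
      destruct (0 <=? Z.of_nat N)%Z eqn:E; [|apply Z.leb_gt in E; lia]. ring.
    + replace (j - Z.of_nat N =? 0)%Z with false by (symmetry; apply Z.eqb_neq; lia).
      rewrite coef_below by (simpl; lia). simpl lco.
      destruct (Z.leb_spec 0 j).
      * replace ((j - Z.of_nat N <? 0)%Z && (- (j - Z.of_nat N) <=? Z.of_nat N)%Z)%bool with true
          by (symmetry; apply andb_true_intro; split; [apply Z.ltb_lt|apply Z.leb_le]; lia).
        unfold fdiv. replace (Z.to_nat (- (j - Z.of_nat N))) with (Z.to_nat (Z.of_nat N - j)) by lia.
        field. apply Hp.
      * replace ((j - Z.of_nat N <? 0)%Z && (- (j - Z.of_nat N) <=? Z.of_nat N)%Z)%bool with false
          by (symmetry; apply Bool.andb_false_iff; right; apply Z.leb_gt; lia).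
        unfold fzero. ring.
  - rewrite coef_above by (simpl; lia).
    replace (j - Z.of_nat N =? 0)%Z with false by (symmetry; apply Z.eqb_neq; lia).
    rewrite (coef_above (qser N p)) by (simpl; lia). ring.
Qed.

Lemma lmono_deg k c s t : coef (lmono k c) k s t = c s t.
Proof. rewrite coef_lmono, Z.eqb_refl. reflexivity. Qed.

Lemma cancel_poly P X Y : (forall s t, coef P (ldeg P) s t <> 0) ->
  LSeq (lmul P X) (lmul P Y) -> LSeq X Y.
Proof.
  intros HP H.
  set (Z := lsub X Y).
  assert (HZ : LSeq (lmul P Z) lzero) by (unfold Z; transitivity (lsub (lmul P X) (lmul P Y)); [ring|rewrite H; ring]).
  assert (Hn : forall n j s t, (ldeg Z - j < Z.of_nat n)%Z -> coef Z j s t = 0).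
  { induction n; intros j s t Hj.
    - apply coef_above. lia.
    - destruct (Z_le_gt_dec j (ldeg Z)); [|apply coef_above; lia].
      pose proof (HZ (ldeg P + j)%Z s t) as E. rewrite coef_lzero in E.
      rewrite (coef_lmul P Z _ s t (ldeg P + j - ldeg Z) (ldeg P)) in E by lia.
      rewrite zsum_last in E by lia.
      rewrite zsum_zero in E.
      + replace (ldeg P + j - ldeg P)%Z with j in E by lia.
        rewrite Rplus_0_l in E. apply Rmult_integral in E. destruct E; auto. exfalso; eapply HP; eauto.
      + intros i Hi. rewrite IHn by lia. ring. }
  intros j s t. assert (E : coef Z j s t = 0) by (apply (Hn (Z.to_nat (ldeg Z - j + 1))); lia).
  unfold Z in E. rewrite coef_lsub in E. lra.
Qed.

Definition gp (d : dir) (N : nat) (p : nat -> CF) := forall i, (i <= N)%nat -> gd d (p i).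

Lemma gLS_qser d N p : pnz p -> gp d N p -> gLS d (qser N p).
Proof.
  intros Hp Hg j s t. unfold coef. simpl.
  destruct (j <=? -1)%Z; [|apply ed_const].
  destruct ((j <? 0)%Z && (- j <=? Z.of_nat N)%Z)%bool eqn:E; [|apply ed_const].
  apply andb_prop in E. destruct E as [E1 E2]. apply Z.leb_le in E2.
  apply ed_div; [apply Hg; lia|apply Hg; lia|apply Hp].
Qed.

Lemma gLS_polyLS d N p : gp d N p -> gLS d (polyLS N p).
Proof.
  intros Hg j s t. unfold coef. simpl.
  destruct (j <=? Z.of_nat N)%Z eqn:E1; [|apply ed_const].
  destruct (0 <=? j)%Z eqn:E2; [|apply ed_const]. apply Z.leb_le in E1. apply Z.leb_le in E2. apply Hg. lia.
Qed.

Lemma lmap_lone d : LSeq (lmap (dderiv d) lone) lzero.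
Proof. unfold lone. rewrite lmap_const. apply lconst_ext. intros. unfold fone, fzero. apply dd_const. Qed.

Lemma CD d N p : pnz p -> gp d N p ->
  LSeq (lmul (polyLS N p) (logD N p (dderiv d))) (lmap (dderiv d) (polyLS N p)).
Proof.
  intros Hp Hg.
  assert (G0 : gd d (p 0%nat)) by (apply Hg; lia).
  assert (Gq : gLS d (qser N p)) by (apply gLS_qser; auto).
  rewrite (poly_factor N p Hp).
  pose proof (gLS_lmono d (Z.of_nat N) _ G0) as Gm.
  pose proof (gLS_ladd d _ _ (gLS_lone d) Gq) as GQ.
  rewrite (lmap_mul d _ _ Gm GQ).
  rewrite (lmap_add d _ _ (gLS_lone d) Gq). rewrite lmap_lone, lmap_mono.
  unfold logD.
  set (mono := lmono (Z.of_nat N) (p 0%nat)). set (Q := ladd lone (qser N p)).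
  transitivity (ladd (lmul (lmul mono (lconst (dderiv d (logp0 p)))) Q)
                     (lmul mono (lmul Q (lmap (dderiv d) (log1q N p))))); [ring|].
  unfold Q, mono. rewrite (LOG _ _ (deriv_ok_lmap d) N p Gq).
  rewrite lmono_const.
  rewrite (lmono_ext _ (fmul (p 0%nat) (dderiv d (logp0 p))) (dderiv d (p 0%nat))).
  ring.
  intros s t. unfold fmul, logp0. rewrite dd_lnabs by (auto; apply G0). field. apply Hp.
Qed.

Lemma Ck N p : pnz p -> LSeq (lmul (polyLS N p) (logDk N p)) (ldk (polyLS N p)).
Proof.
  intros Hp.
  rewrite (poly_factor N p Hp).
  rewrite ldk_mul, ldk_add. unfold lone. rewrite ldk_const. fold lone. rewrite ldk_mono.
  unfold logDk.
  set (mono := lmono (Z.of_nat N) (p 0%nat)). set (Q := ladd lone (qser N p)).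
  transitivity (ladd (lmul (lmul mono (lmono (-1) (fconst (INR N)))) Q)
                     (lmul mono (lmul Q (ldk (log1q N p))))); [ring|].
  unfold Q, mono. rewrite (LOG _ _ deriv_ok_ldk N p I).
  rewrite lmono_mul.
  replace (Z.of_nat N + -1)%Z with (Z.of_nat N - 1)%Z by lia.
  rewrite (lmono_ext _ (fmul (p 0%nat) (fconst (INR N))) (fscal (IZR (Z.of_nat N)) (p 0%nat))).
  ring.
  intros s t. unfold fmul, fscal, fconst. rewrite <- INR_IZR_INZ. ring.
Qed.

Definition P1 (d : dir) (y s : R) : R := match d with Ds => y | Dc _ => s end.
Definition P2 (d : dir) (y : R) (t : nat -> R) : nat -> R := match d with Ds => t | Dc i => upd t i y end.

Lemma ad_eq d y f s t : apply_dir d y f s t = f (P1 d y s) (P2 d y t).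
Proof. destruct d; reflexivity. Qed.
Lemma coord_mv d y s t : coord d (P1 d y s) (P2 d y t) = y.
Proof. destruct d; simpl. reflexivity. unfold upd. rewrite Nat.eqb_refl. reflexivity. Qed.
Lemma coord_mv_o d1 d2 y s t : d1 <> d2 -> coord d2 (P1 d1 y s) (P2 d1 y t) = coord d2 s t.
Proof.
  intros H. destruct d1, d2; simpl; try reflexivity. congruence.
  unfold upd. destruct (Nat.eqb_spec i0 i); [subst; congruence|reflexivity].
Qed.
Lemma P1_idem d y y' s : P1 d y (P1 d y' s) = P1 d y s. Proof. destruct d; reflexivity. Qed.
Lemma P2_idem d y y' t : P2 d y (P2 d y' t) = P2 d y t.
Proof. destruct d; simpl; auto. extensionality j. unfold upd. destruct (j =? i); reflexivity. Qed.
Lemma P1_comm d1 d2 y1 y2 s : d1 <> d2 -> P1 d1 y1 (P1 d2 y2 s) = P1 d2 y2 (P1 d1 y1 s).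
Proof. intros H. destruct d1, d2; simpl; auto. congruence. Qed.
Lemma P2_comm d1 d2 y1 y2 t : d1 <> d2 -> P2 d1 y1 (P2 d2 y2 t) = P2 d2 y2 (P2 d1 y1 t).
Proof.
  intros H. destruct d1, d2; simpl; auto.
  extensionality j. unfold upd. destruct (Nat.eqb_spec j i); destruct (Nat.eqb_spec j i0); subst; auto.
  congruence.
Qed.
Lemma P1_self d s t : P1 d (coord d s t) s = s. Proof. destruct d; reflexivity. Qed.
Lemma P2_self d s t : P2 d (coord d s t) t = t.
Proof. destruct d; simpl; auto. extensionality j. unfold upd. destruct (Nat.eqb_spec j i); subst; auto. Qed.
Lemma P1_t d y s : P1 d y s = P1 d y s. Proof. reflexivity. Qed.
Lemma coord_at d s t : coord d s t = coord d s t. Proof. reflexivity. Qed.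

Lemma dderiv_at d g s t : dderiv d g s t = Derive (fun y => g (P1 d y s) (P2 d y t)) (coord d s t).
Proof. unfold dderiv. f_equal. extensionality y. apply ad_eq. Qed.

Lemma cont_2d (G : R * R -> R) x y : continuous G (x, y) -> continuity_2d_pt (fun u v => G (u, v)) x y.
Proof.
  intros H eps. apply locally_2d_locally.
  specialize (H _ (locally_ball (G (x, y)) eps)). simpl in H.
  eapply filter_imp; [|exact H]. intros [u v] Hb. simpl. exact Hb.
Qed.

Lemma cont_2d_swap (G : R * R -> R) x y : continuous G (y, x) -> continuity_2d_pt (fun u v => G (v, u)) x y.
Proof.
  intros H eps. pose proof (cont_2d G y x H eps) as [delta Hd].
  exists delta. intros u v Hu Hv. apply Hd; auto.
Qed.

Lemma smooth_ed f d l s t : smooth f -> ex_derive (fun y => apply_dir d y (iterd l f) s t) (coord d s t).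
Proof. intros H. apply (proj1 (H l)). Qed.

Lemma smooth_schwarz phi d1 d2 s t : smooth phi ->
  dderiv d1 (dderiv d2 phi) s t = dderiv d2 (dderiv d1 phi) s t.
Proof.
  intros Hs.
  destruct (sumbool_of_bool (match d1, d2 with Ds, Ds => true | Dc i, Dc j => Nat.eqb i j | _, _ => false end)) as [E|E].
  { destruct d1, d2; try discriminate; auto. apply Nat.eqb_eq in E. subst. reflexivity. }
  assert (Hne : d1 <> d2).
  { intros ->. destruct d2; simpl in E; try discriminate. rewrite Nat.eqb_refl in E. discriminate. }
  set (c1 := coord d1 s t). set (c2 := coord d2 s t).
  set (X := fun u v => (P1 d1 u (P1 d2 v s), P2 d1 u (P2 d2 v t))).
  set (F := fun u v => phi (fst (X u v)) (snd (X u v))).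
  assert (HA : forall u v, dderiv d2 phi (P1 d1 u (P1 d2 v s)) (P2 d1 u (P2 d2 v t)) = Derive (fun w => F u w) v).
  { intros u v. rewrite dderiv_at. unfold F, X; simpl.
    rewrite (coord_mv_o d1 d2) by auto. rewrite (P1_comm d1 d2), (P2_comm d1 d2) by auto. rewrite coord_mv.
    f_equal. extensionality w. rewrite P1_idem, P2_idem. rewrite (P1_comm d1 d2), (P2_comm d1 d2) by auto. reflexivity. }
  assert (HB : forall u v, dderiv d1 phi (P1 d1 u (P1 d2 v s)) (P2 d1 u (P2 d2 v t)) = Derive (fun w => F w v) u).
  { intros u v. rewrite dderiv_at. unfold F, X; simpl. rewrite coord_mv.
    f_equal. extensionality w. rewrite P1_idem, P2_idem. reflexivity. }
  assert (HC : forall u v, dderiv d1 (dderiv d2 phi) (P1 d1 u (P1 d2 v s)) (P2 d1 u (P2 d2 v t)) =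
                           Derive (fun z => Derive (fun w => F z w) v) u).
  { intros u v. rewrite dderiv_at. rewrite coord_mv. f_equal. extensionality z.
    rewrite P1_idem, P2_idem. apply HA. }
  assert (HD : forall u v, dderiv d2 (dderiv d1 phi) (P1 d1 u (P1 d2 v s)) (P2 d1 u (P2 d2 v t)) =
                           Derive (fun z => Derive (fun w => F w z) u) v).
  { intros u v. rewrite dderiv_at. rewrite (P1_comm d1 d2), (P2_comm d1 d2) by auto. rewrite coord_mv. f_equal. extensionality z.
    rewrite P1_idem, P2_idem. rewrite <- (P1_comm d1 d2), <- (P2_comm d1 d2) by auto. apply HB. }
  assert (Hs0 : s = P1 d1 c1 (P1 d2 c2 s) /\ t = P2 d1 c1 (P2 d2 c2 t)).
  { unfold c1, c2. rewrite !P1_self, !P2_self. auto. }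
  destruct Hs0 as [Es Et].
  rewrite Es, Et at 1. rewrite HC. rewrite Es, Et. rewrite HD.
  apply Schwarz.
  - apply locally_2d_forall. intros u v. repeat split.
    + pose proof (smooth_ed phi d1 [] (P1 d1 u (P1 d2 v s)) (P2 d1 u (P2 d2 v t)) Hs) as H.
      simpl iterd in H. rewrite coord_mv in H. eapply ex_derive_ext; [|exact H].
      intros y. simpl. rewrite ad_eq, P1_idem, P2_idem. reflexivity.
    + pose proof (smooth_ed phi d2 [] (P1 d1 u (P1 d2 v s)) (P2 d1 u (P2 d2 v t)) Hs) as H.
      simpl iterd in H. rewrite (P1_comm d1 d2), (P2_comm d1 d2) in H by auto. rewrite coord_mv in H.
      eapply ex_derive_ext; [|exact H].
      intros y. unfold F, X. simpl. rewrite ad_eq, P1_idem, P2_idem. rewrite (P1_comm d1 d2), (P2_comm d1 d2) by auto. reflexivity.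
    + pose proof (smooth_ed phi d1 [d2] (P1 d1 u (P1 d2 v s)) (P2 d1 u (P2 d2 v t)) Hs) as H.
      simpl iterd in H. rewrite coord_mv in H. eapply ex_derive_ext; [|exact H].
      intros y. simpl. rewrite ad_eq, P1_idem, P2_idem. apply HA.
    + pose proof (smooth_ed phi d2 [d1] (P1 d1 u (P1 d2 v s)) (P2 d1 u (P2 d2 v t)) Hs) as H.
      simpl iterd in H. rewrite (P1_comm d1 d2), (P2_comm d1 d2) in H by auto. rewrite coord_mv in H.
      eapply ex_derive_ext; [|exact H].
      intros y. simpl. rewrite ad_eq, P1_idem, P2_idem. rewrite <- (P1_comm d1 d2), <- (P2_comm d1 d2) by auto. apply HB.
  - pose proof (proj2 (Hs [d1; d2]) d1 d2 s t) as H.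
    apply cont_2d in H. eapply continuity_2d_pt_ext; [|exact H].
    intros u v. unfold slice2. simpl. rewrite !ad_eq. simpl iterd. apply HC.
  - pose proof (proj2 (Hs [d2; d1]) d2 d1 s t) as H.
    apply cont_2d_swap in H. eapply continuity_2d_pt_ext; [|exact H].
    intros u v. unfold slice2. simpl. rewrite !ad_eq. simpl iterd.
    rewrite <- (P1_comm d1 d2), <- (P2_comm d1 d2) by auto. apply HD.
Qed.

Lemma dx_eq : dx = dderiv (Dc 0). Proof. reflexivity. Qed.

Lemma coef_adphi phi g j s t : coef (adphi phi g) j s t = - (dx phi s t * (IZR (j + 1) * coef g (j + 1) s t)).
Proof.
  unfold adphi, bracket. rewrite dx_eq. rewrite ldk_const, lmap_const.
  rewrite coef_lsub, lmul_const_l, coef_ldk.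
  rewrite (coef_lmul lzero _ j s t (j - ldeg (lmap (dderiv (Dc 0)) g)) 0) by (simpl; lia).
  rewrite zsum_zero. ring. intros. rewrite coef_lzero. ring.
Qed.

Lemma coef_adpow phi g m j s t :
  coef (adpow phi m g) j s t = (- dx phi s t) ^ m * ff (IZR (j + Z.of_nat m)) m * coef g (j + Z.of_nat m) s t.
Proof.
  revert j. induction m; intros j.
  - cbn [adpow Z.of_nat pow]. rewrite Z.add_0_r, ff_0. ring.
  - simpl adpow. rewrite coef_adphi, IHm.
    replace (j + 1 + Z.of_nat m)%Z with (j + Z.of_nat (S m))%Z by lia.
    rewrite ff_S_r. rewrite INR_IZR_INZ. rewrite <- minus_IZR.
    replace (j + Z.of_nat (S m) - Z.of_nat m)%Z with (j + 1)%Z by lia.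
    simpl pow. ring.
Qed.

Lemma nsum_extend K M G : (forall m, (K <= m)%nat -> G m = 0) -> (K <= M)%nat -> nsum M G = nsum K G.
Proof.
  intros H HM. induction HM. reflexivity. rewrite nsum_S_r, IHHM, H by lia. ring.
Qed.

Lemma expad_part phi u : is_expad phi (Lax u) (lsubst (Lax u) (dx phi)).
Proof.
  intros j s t.
  set (G := fun m => coef (adpow phi m (Lax u)) j s t / INR (fact m)).
  assert (HG : forall m, (1 < j + Z.of_nat m)%Z -> G m = 0).
  { intros m Hm. unfold G. rewrite coef_adpow. rewrite (coef_above (Lax u)) by (simpl; lia). unfold Rdiv. ring. }
  set (K := S (Z.to_nat (1 - j))).
  exists K. intros M' HM'.
  change (nsum M' G = coef (lsubst (Lax u) (dx phi)) j s t).
  rewrite (nsum_extend K M' G) by (auto; intros m Hm; apply HG; lia).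
  rewrite (coefT _ _ j s t 1) by (simpl; lia).
  destruct (Z_le_gt_dec j 1) as [Hj|Hj].
  - unfold K.
    etransitivity; [apply (nsum_ext _ G (fun r => (fun z => G (Z.to_nat z)) (Z.of_nat r))); intros; cbv beta; rewrite Nat2Z.id; reflexivity|].
    etransitivity; [symmetry; apply (zsum0_nsum (Z.to_nat (1 - j)) (fun z => G (Z.to_nat z)))|].
    replace (Z.of_nat (Z.to_nat (1 - j))) with (1 - j)%Z by lia.
    transitivity (zsum 0 (1 - j) (fun r => (fun k => bin (IZR k) (Z.to_nat (k - j)) * (- dx phi s t) ^ Z.to_nat (k - j) * coef (Lax u) k s t) (r + j)%Z)).
    + apply zsum_ext. intros r Hr. cbv beta. unfold G. rewrite coef_adpow.
      replace (j + Z.of_nat (Z.to_nat r))%Z with (r + j)%Z by lia.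
      replace (Z.to_nat (r + j - j)) with (Z.to_nat r) by lia.
      unfold bin. field. apply fact_pos.
    + etransitivity; [apply (zsum_shift 0 (1 - j) j (fun k => bin (IZR k) (Z.to_nat (k - j)) * (- dx phi s t) ^ Z.to_nat (k - j) * coef (Lax u) k s t))|]. f_equal; lia.
  - rewrite zsum_nil by lia. unfold K. replace (Z.to_nat (1 - j)) with 0%nat by lia.
    rewrite nsum_S_r. unfold nsum. simpl. rewrite HG by lia. ring.
Qed.

Notation d0 := (Dc 0).

Lemma ldk_sub f g : LSeq (ldk (lsub f g)) (lsub (ldk f) (ldk g)).
Proof. unfold lsub. rewrite ldk_add, ldk_opp. reflexivity. Qed.

Lemma bracket_sub_l f1 f2 g : gLS d0 f1 -> gLS d0 f2 ->
  LSeq (bracket (lsub f1 f2) g) (lsub (bracket f1 g) (bracket f2 g)).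
Proof.
  intros H1 H2. unfold bracket. change dx with (dderiv d0).
  rewrite ldk_sub, (lmap_sub d0 f1 f2 H1 H2). ring.
Qed.

Lemma bracket_const_l c g : LSeq (bracket (lconst c) g) (lopp (lmul (lconst (dx c)) (ldk g))).
Proof.
  unfold bracket. change dx with (dderiv d0). rewrite ldk_const, lmap_const. ring.
Qed.

Lemma bracket_T f g a : gLS d0 f -> gLS d0 g -> gd d0 a ->
  LSeq (bracket (lsubst f a) (lsubst g a)) (lsubst (bracket f g) a).
Proof.
  intros Hf Hg Ha. unfold bracket. change dx with (dderiv d0).
  rewrite !lmap_subst by auto. rewrite !T_ldk.
  rewrite T_lsub, !T_lmul. ring.
Qed.

Lemma bl_sub_r N p g1 g2 : gLS d0 g1 -> gLS d0 g2 ->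
  LSeq (bracket_log N p (lsub g1 g2)) (lsub (bracket_log N p g1) (bracket_log N p g2)).
Proof.
  intros H1 H2. unfold bracket_log. change dx with (dderiv d0).
  rewrite ldk_sub, (lmap_sub d0 g1 g2 H1 H2). ring.
Qed.

Lemma bl_const_r N p c : LSeq (bracket_log N p (lconst c)) (lmul (logDk N p) (lconst (dx c))).
Proof.
  unfold bracket_log. change dx with (dderiv d0). rewrite ldk_const, lmap_const. ring.
Qed.

Add Parametric Morphism N p : (bracket_log N p) with signature LSeq ==> LSeq as bl_mor.
Proof. intros g g' H. unfold bracket_log. change dx with (dderiv d0). rewrite H. reflexivity. Qed.

Section PT.
Variable N : nat.
Variable p : nat -> CF.
Variable phi : CF.
Notation a := (dx phi).
Notation E := (fun s t => exp (ds phi s t)).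
Notation pt := (ptilde N p phi).

Lemma coef_poly_neg j s t : (j < 0)%Z -> coef (polyLS N p) j s t = 0.
Proof.
  intros H. destruct (Z_le_gt_dec j (Z.of_nat N)).
  - rewrite coef_below by (simpl; lia). simpl. replace (0 <=? j)%Z with false by (symmetry; apply Z.leb_gt; lia). reflexivity.
  - apply coef_above. simpl. lia.
Qed.

Lemma TP_neg j s t : (j < 0)%Z -> coef (lsubst (polyLS N p) a) j s t = 0.
Proof.
  intros H. rewrite (coefT _ _ j s t (Z.of_nat N)) by (simpl; lia).
  apply zsum_zero. intros k Hk. destruct (Z_lt_le_dec k 0).
  - rewrite coef_poly_neg by auto. ring.
  - rewrite bin_zero by lia. ring.
Qed.

Lemma PT : LSeq (polyLS N pt) (lmul (lconst E) (lsubst (polyLS N p) a)).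
Proof.
  intros j s t. rewrite lmul_const_l.
  destruct (Z_le_gt_dec j (Z.of_nat N)).
  - rewrite coef_below by (simpl; lia). simpl lco.
    destruct (Z.leb_spec 0 j).
    + unfold ptilde, fmul. replace (Z.of_nat N - Z.of_nat (Z.to_nat (Z.of_nat N - j)))%Z with j by lia. reflexivity.
    + rewrite TP_neg by lia. unfold fzero. ring.
  - rewrite !coef_above by (simpl; lia). ring.
Qed.

Lemma pt0 s t : pt 0%nat s t = exp (ds phi s t) * p 0%nat s t.
Proof.
  unfold ptilde, fmul. f_equal. rewrite Z.sub_0_r.
  rewrite (coefT _ _ _ s t (Z.of_nat N)) by (simpl; lia). rewrite zsum_single.
  rewrite Z.sub_diag. simpl. rewrite coef_below by (simpl; lia). simpl.
  replace (0 <=? Z.of_nat N)%Z with true by (symmetry; apply Z.leb_le; lia).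
  rewrite Z.sub_diag. simpl. rewrite bin_0. ring.
Qed.

Lemma pnz_pt : pnz p -> pnz pt.
Proof. intros H s t. rewrite pt0. apply Rmult_integral_contrapositive. split. apply Rgt_not_eq, exp_pos. apply H. Qed.

Lemma lead_pt : pnz p -> forall s t, coef (polyLS N pt) (ldeg (polyLS N pt)) s t <> 0.
Proof.
  intros H s t. simpl ldeg. rewrite coef_below by (simpl; lia). simpl.
  replace (0 <=? Z.of_nat N)%Z with true by (symmetry; apply Z.leb_le; lia).
  rewrite Z.sub_diag. apply pnz_pt; auto.
Qed.

Lemma gp_pt d : gp d N p -> gd d a -> gd d (ds phi) -> gp d N pt.
Proof.
  intros Hp Ha Hs i Hi s t. unfold ptilde, fmul. apply ed_mul.
  - apply ed_exp. apply Hs.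
  - apply gLS_lsubst; auto. apply gLS_polyLS; auto.
Qed.

Lemma L1 : pnz p -> LSeq (logDk N pt) (lsubst (logDk N p) a).
Proof.
  intros Hp. apply (cancel_poly (polyLS N pt)). apply lead_pt; auto.
  rewrite Ck by (apply pnz_pt; auto).
  rewrite PT. rewrite ldk_mul, ldk_const, T_ldk, <- Ck by auto. rewrite T_lmul. ring.
Qed.

Lemma L2 d : pnz p -> gp d N p -> gd d a -> gd d (ds phi) ->
  LSeq (logD N pt (dderiv d))
    (ladd (lconst (dderiv d (ds phi)))
      (ladd (lsubst (logD N p (dderiv d)) a) (lmul (lconst (fopp (dderiv d a))) (lsubst (logDk N p) a)))).
Proof.
  intros Hp Hg Ha Hs. apply (cancel_poly (polyLS N pt)). apply lead_pt; auto.
  rewrite CD by (try apply pnz_pt; try apply gp_pt; auto).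
  rewrite PT.
  assert (GE : gLS d (lconst E)) by (apply gLS_lconst; intros s t; apply ed_exp, Hs).
  assert (GT : gLS d (lsubst (polyLS N p) a)) by (apply gLS_lsubst; auto; apply gLS_polyLS; auto).
  rewrite (lmap_mul d _ _ GE GT). rewrite lmap_const.
  rewrite lmap_subst by (auto; apply gLS_polyLS; auto).
  rewrite <- (CD d N p Hp Hg), <- (Ck N p Hp).
  rewrite !T_lmul.
  rewrite (lconst_ext (dderiv d E) (fmul (dderiv d (ds phi)) E)).
  2:{ intros s t. unfold fmul. rewrite dd_exp by apply Hs. reflexivity. }
  rewrite <- lconst_mul. ring.
Qed.

Lemma BL g : pnz p -> gp d0 N p -> gd d0 a -> gd d0 (ds phi) -> gLS d0 g ->
  LSeq (bracket_log N pt (lsubst g a))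
       (ladd (lsubst (bracket_log N p g) a) (lmul (lconst (fopp (dx (ds phi)))) (lsubst (ldk g) a))).
Proof.
  intros Hp Hg Ha Hs Hgg. unfold bracket_log. change dx with (dderiv d0).
  rewrite L1 by auto. rewrite L2 by auto.
  rewrite lmap_subst by auto. rewrite T_ldk.
  rewrite T_lsub, !T_lmul.
  change (dx phi) with (dderiv d0 phi).
  rewrite <- !lconst_opp. ring.
Qed.
End PT.

Theorem mainTheorem14 (N : nat) (u : nat -> CF) (p : nat -> CF) (phi : CF) :
  (1 <= N)%nat ->
  (forall n, smooth (u n)) ->
  (forall i, (i <= N)%nat -> smooth (p i)) ->
  smooth phi ->
  dcmKP N (Lax u) p ->
  (forall n, (1 <= n)%nat -> forall s t,
      dt n phi s t = - peval (Bn (Lax u) n) (fopp (dx phi)) s t) ->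
  is_expad phi (Lax u) (lsubst (Lax u) (dx phi)) /\
  dcmKP N (lsubst (Lax u) (dx phi)) (ptilde N p phi).
Proof.
  intros HN Hu Hp Hphi [Hp0 [Heq Hs]] Hphit.
  split; [apply expad_part|].
  assert (Ga : forall d, gd d (dx phi)) by (intros d s t; exact (smooth_ed phi d [Dc 0] s t Hphi)).
  assert (Gs : forall d, gd d (ds phi)) by (intros d s t; exact (smooth_ed phi d [Ds] s t Hphi)).
  assert (GL : forall d, gLS d (Lax u)).
  { intros d j s t. unfold coef. simpl. destruct (j <=? 1)%Z; [|apply ed_const].
    destruct (j =? 1)%Z; [apply ed_const|]. exact (smooth_ed (u _) d [] s t (Hu _)). }
  assert (Gp : forall d, gp d N p) by (intros d i Hi s t; exact (smooth_ed (p i) d [] s t (Hp i Hi))).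
  assert (Hpnz : pnz p) by exact Hp0.
  assert (GT : forall d f, gLS d f -> gLS d (lsubst f (dx phi))) by (intros; apply gLS_lsubst; auto).
  assert (Sw : forall d1 d2 s t, dderiv d1 (dderiv d2 phi) s t = dderiv d2 (dderiv d1 phi) s t)
    by (intros; apply smooth_schwarz; auto).
  assert (HB : forall n, LSeq (Bn (lsubst (Lax u) (dx phi)) n)
     (lsub (lsubst (Bn (Lax u) n) (dx phi)) (lconst (peval (Bn (Lax u) n) (fopp (dx phi)))))).
  { intros n. unfold Bn. rewrite <- T_lpow. apply T_lpos. }
  assert (E3 : LSeq (lconst (fopp (dderiv Ds (dderiv d0 phi)))) (lconst (fopp (dderiv d0 (dderiv Ds phi))))).
  { apply lconst_ext. intros. unfold fopp. rewrite Sw. reflexivity. }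
  split; [apply pnz_pt; auto|]. split.
  - intros n Hn. specialize (Heq n Hn) as [Heq1 Heq2].
    set (dn := Dc (Nat.pred n)).
    set (cB := peval (Bn (Lax u) n) (fopp (dx phi))).
    assert (Hcb : forall s t, cB s t = - dderiv dn phi s t) by (intros s t; unfold cB; pose proof (Hphit n Hn s t) as H; change (dt n phi s t) with (dderiv dn phi s t) in H; lra).
    assert (GcB : forall d, gd d cB).
    { intros d s t. eapply ed_ext. intros; symmetry; apply Hcb. apply ed_opp. exact (smooth_ed phi d [dn] s t Hphi). }
    assert (GB : forall d, gLS d (Bn (Lax u) n)) by (intros; apply gLS_Bn; auto).
    assert (E1 : LSeq (lconst (dderiv d0 cB)) (lconst (fopp (dderiv dn (dderiv d0 phi))))).
    { apply lconst_ext. intros s t. unfold fopp. rewrite (dd_ext _ _ _ s t Hcb), dd_opp, Sw. reflexivity. }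
    assert (E2 : LSeq (lconst (dderiv Ds cB)) (lopp (lconst (dderiv dn (dderiv Ds phi))))).
    { rewrite lconst_opp. apply lconst_ext. intros s t. unfold fopp. rewrite (dd_ext _ _ _ s t Hcb), dd_opp, Sw. reflexivity. }
    change (dt n) with (dderiv dn) in *. change ds with (dderiv Ds) in *.
    assert (GcBl : forall d, gLS d (lconst cB)) by (intros; apply gLS_lconst; auto).
    split.
    + rewrite (lmap_subst dn (Lax u) (dx phi) (GL dn) (Ga dn)).
      rewrite Heq1. rewrite HB. fold cB.
      rewrite bracket_sub_l by auto. rewrite bracket_T by auto. rewrite bracket_const_l, T_ldk.
      change dx with (dderiv d0) in *. rewrite E1. ring.
    + rewrite (L2 N p phi dn Hpnz (Gp dn) (Ga dn) (Gs dn)).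
      rewrite Heq2. rewrite HB. fold cB.
      rewrite (lmap_sub Ds) by auto.
      rewrite lmap_subst by auto. rewrite lmap_const.
      rewrite bl_sub_r by auto.
      rewrite BL by auto. rewrite bl_const_r. rewrite L1 by auto.
      rewrite T_lsub.
      change dx with (dderiv d0) in *. change ds with (dderiv Ds) in *.
      rewrite E1, E2, E3. ring.
  - change ds with (dderiv Ds) in *.
    rewrite (lmap_subst Ds (Lax u) (dx phi) (GL Ds) (Ga Ds)).
    rewrite Hs. rewrite BL by auto.
    change dx with (dderiv d0) in *. change ds with (dderiv Ds) in *.
    rewrite E3. ring.
Qed.
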